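(* For each of the seven difference systems $a\mathcal{Q}3^{\delta}$, $a\mathcal{Q}2$, $a\mathcal{Q}1^{\delta}$, $a\mathcal{A}1^{\delta}$, $a\mathcal{H}3^{\delta}$, $a\mathcal{H}2$, $a\mathcal{H}1$ (taken with $n=2$), a Lax matrix is $$ L(u,s;p,\lambda) = \frac{1}{\sqrt{A}}\begin{bmatrix} \mathbf{0} & \mathbf{L}^1 \\ \mathbf{L}^2 & \mathbf{0} \end{bmatrix}, $$ where $\mathbf{L}^1,\mathbf{L}^2$ are $2\times 2$ matrices with $\det \mathbf{L}^1=\det \mathbf{L}^2 =c A$, $c$ some non-zero constant, and $\mathbf{L}^1,\mathbf{L}^2,A$ are: $a\mathcal{Q}3^{\delta}$: with $\Lambda:=\lambda-\frac{1}{\lambda}$, $P:=p-\frac{1}{p}$, $\mathbf{L}^1=\begin{bmatrix} \Lambda(s-u)+\left(-P+\frac{\lambda}{p}-\frac{p}{\lambda}\right)(s+u) & 2\Lambda\left(\delta P \left(\frac{\lambda}{p}-\frac{p}{\lambda}\right) +su\right)\\ -2P & \left(P+\frac{\lambda}{p}-\frac{p}{\lambda}\right)(s-u)+\Lambda(s+u)\end{bmatrix}$, $\mathbf{L}^2=\begin{bmatrix} -\Lambda (s-u)-\left(P+\frac{\lambda}{p}-\frac{p}{\lambda}\right)(s+u) & 2\Lambda\left(\delta P\left(\frac{p}{\lambda}-\frac{\lambda}{p}\right)+su\right)\\ 2P & \left(P+\frac{p}{\lambda}-\frac{\lambda}{p}\right)(s-u)-\Lambda(s+u)\end{bmatrix}$,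 $A=4\delta (1-p^2)^2+p(1+p)^2s^2-p(1-p)^2u^2$. $a\mathcal{Q}2$: $\mathbf{L}^1=\begin{bmatrix} (\lambda -p)(\lambda p-s)+pu & \lambda(-\lambda p+p^2+s)\left(p(p-\lambda)-u\right)+\lambda^3p(p-\lambda)\\ p & \lambda\left(p(p-\lambda)-s\right)\end{bmatrix}$, $\mathbf{L}^2=\begin{bmatrix} \lambda(-\lambda p+p^2+s) & \lambda(-\lambda p+p^2-s)\left(p(\lambda-p)+u\right)+\lambda^3p(\lambda-p)\\ -p & (\lambda-p)(\lambda p+s)+pu\end{bmatrix}$, $A=p^4+s^2-2p^2u$. $a\mathcal{Q}1^{\delta}$: $\mathbf{L}^1=\begin{bmatrix} -\lambda s+p(s+u) & \lambda\left(\delta p(\lambda-p)-su\right)\\ p & -\lambda s\end{bmatrix}$, $\mathbf{L}^2=\begin{bmatrix} \lambda s & \lambda\left(\delta p(p-\lambda)-su\right)\\ -p & \lambda s-p(s-u)\end{bmatrix}$, $A=\delta p^2-s^2$. $a\mathcal{A}1^{\delta}$: $\mathbf{L}^1=\begin{bmatrix} -\lambda u & \lambda\left(\delta p(\lambda-p)+su \right)\\ -p & p(s-u)+\lambda u\end{bmatrix}$, $\mathbf{L}^2=\begin{bmatrix} -\lambda u+p (s+u) & \lambda\left(\delta p (\lambda-p)-su\right)\\ -p & \lambda u\end{bmatrix}$, $A=\delta p^2-u^2$. $a\mathcal{H}3^{\delta}$: $\mathbf{L}^1=\begin{bmatrix} \lambda (s-u)-p(s+u) & 2\delta (p^2-\lambda^2)+2\lambda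 s u\\ -2p & p(s-u)+\lambda (s+u)\end{bmatrix}$, $\mathbf{L}^2=\begin{bmatrix} \lambda(s-u)+p(s+u) & 2\delta (p^2-\lambda^2)-2\lambda s u \\ -2p & -p(s-u)+\lambda (s+u)\end{bmatrix}$, $A=4\delta p+u^2-s^2$. $a\mathcal{H}2$: $\mathbf{L}^1=\begin{bmatrix} \lambda-p-u & \lambda^2+(s-p)(p+u)-\lambda(s-u)\\ -1 & -\lambda+p+s\end{bmatrix}$, $\mathbf{L}^2=\begin{bmatrix} \lambda-p+s & \lambda^2-(p+s)(p+u)+\lambda(s+u)\\ -1 & -\lambda+p+u\end{bmatrix}$, $A=p+u$. $a\mathcal{H}1$: $\mathbf{L}^1=\begin{bmatrix} -u & -\lambda+p+su\\ -1 & s\end{bmatrix}$, $\mathbf{L}^2=\begin{bmatrix} s & -\lambda+p-su\\ -1 & u\end{bmatrix}$, $A=1$.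
   Context: We consider difference systems in ''bond variables'' on the edges of a $\mathbb{Z}^2$ graph. For $i\neq j\in\{1,2\}$, $X^i,Y^i$ are fields on edges of direction $i$, $p^i$ are lattice parameters, and a subscript $j$ denotes a shift in direction $j$. With $n=2$ we identify $u:=X^1$, $s:=Y^1$, $v:=X^2$, $t:=Y^2$, $p:=p^1$, $q:=p^2$, $u_2:=X^1_2$, $s_2:=Y^1_2$, $v_1:=X^2_1$, $t_1:=Y^2_1$. The a-list of systems ($i\neq j\in\{1,2\}$, $\delta\in\{0,1\}$) is: $a\mathcal{Q}3^{\delta}$: $X^i_j= Y^i-2\frac{\delta a b c+(bY^i-aX^j)(Y^i-Y^j)+cY^iX^j}{2bY^i-(a+b+c)Y^j-(a-b-c)X^j}$, $Y^i_j=X^i-2\frac{\delta a b c+(bX^i-aX^j)(X^i+Y^j)+cX^iX^j}{2bX^i-(a-b+c)Y^j-(a+b-c)X^j}$, with $a:=p^i-\frac{1}{p^i}$, $b:=p^j-\frac{1}{p^j}$, $c:=\frac{p^i}{p^j}-\frac{p^j}{p^i}$. $a\mathcal{Q}2$: $X^i_j=X^j+(p^i-p^j)\frac{p^ip^j([p^i]^2-p^ip^j+[p^j]^2)+Y^iY^j-p^ip^j(Y^i-Y^j+2X^j)}{p^iY^j-p^jY^i+p^ip^j(p^i-p^j)}$, $Y^i_j=p^i\frac{p^j(p^i-p^j)([p^i]^2-p^ip^j+[p^j]^2-X^i-X^j-Y^j)+Y^j(X^i-X^j)}{(p^ip^j+Y^j)(p^i-p^j)-p^j(X^i-X^j)}$.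 $a\mathcal{Q}1^{\delta}$: $X^i_j=X^j+(p^i-p^j)\frac{\delta p^ip^j-Y^iY^j}{p^jY^i-p^iY^j}$, $Y^i_j=p^i\frac{\delta p^j(p^j-p^i)+Y^j(X^i-X^j)}{p^iY^j-p^j(X^i-X^j+Y^j)}$. $a\mathcal{A}1^{\delta}$: $X^i_j=p^i\frac{\delta p^j(p^i-p^j)+X^j(Y^j-Y^i)}{p^iX^j-p^j(Y^i+X^j-Y^j)}$, $Y^i_j=-Y^j+(p^i-p^j)\frac{\delta p^ip^j-X^iX^j}{p^iX^j-p^jX^i}$. $a\mathcal{H}3^{\delta}$: $X^i_j=\frac{(p^i-p^j)\left(2\delta (p^i+p^j)-Y^iY^j\right)+\left((p^i+p^j)Y^i-2p^iY^j\right)X^j}{p^j(2Y^i+X^j-Y^j)-p^i(X^j+Y^j)}$, $Y^i_j=\frac{2\delta ({p^j}^2-{p^i}^2)+p^iX^iY^j-p^iX^j(X^i+2Y^j)+p^jX^i(X^j+Y^j)}{p^i(X^j+Y^j)-p^j(2X^i-X^j+Y^j)}$. $a\mathcal{H}2$: $X^i_j=X^j-(p^i-p^j)\frac{p^i+p^j+Y^i-Y^j+2X^j}{p^i-p^j+Y^i-Y^j}$, $Y^i_j=p^i-p^j-Y^j-2(p^i-p^j)\frac{p^i+X^i}{p^i-p^j+X^i-X^j}$. $a\mathcal{H}1$: $X^i_j=X^j+\frac{p^i-p^j}{Y^i-Y^j}$, $Y^i_j=-Y^i+\frac{p^i-p^j}{X^i-X^j}$. A matrix $L(u,s;p,\lambda)$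 is called a Lax matrix of such a system (written as $u_2=f^1(s,v,t)$, $s_2=f^2(u,v,t)$, $v_1=f^3(u,s,t)$, $t_1=f^4(u,s,v)$) if these equations imply $L(u_2,s_2;p,\lambda)\,L(v,t;q,\lambda)=L(v_1,t_1;q,\lambda)\,L(u,s;p,\lambda)$ for all $\lambda$; this is the compatibility condition of $\Psi_1=L(u,s;p,\lambda)\Psi$, $\Psi_2=L(v,t;q,\lambda)\Psi$. *)

(* Defs.v *)
From HB Require Import structures.
From mathcomp Require Import all_boot all_order all_algebra.
Set Implicit Arguments. Unset Strict Implicit. Unset Printing Implicit Defensive.
Import Order.TTheory GRing.Theory Num.Theory.
Local Open Scope ring_scope.

Section Defs.
Variable C : numClosedFieldType.

Definition mx2 (a b c d : C) : 'M[C]_2 :=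
  \matrix_(i < 2, j < 2)
    if (i : nat) == 0%N then (if (j : nat) == 0%N then a else b)
    else (if (j : nat) == 0%N then c else d).

(* L = (1/r) [[0, L1], [L2, 0]], where r is a square root of A *)
Definition LaxM (L1 L2 : 'M[C]_2) (r : C) : 'M[C]_(2 + 2) :=
  r^-1 *: block_mx 0 L1 L2 0.

(* A system in bond variables, n = 2:  X^i_j = X Xi Yi Xj Yj pi pj,
   Y^i_j = Y Xi Yi Xj Yj pi pj; [dom Xi Yi Xj Yj pi pj] says that the
   denominators of both right-hand sides are non-zero.  [par] is the
   admissibility condition on lattice/spectral parameters.
   With u = X^1, s = Y^1, v = X^2, t = Y^2, p = p^1, q = p^2:
     u_2 = X u s v t p q, s_2 = Y u s v t p q,
     v_1 = X v t u s q p, t_1 = Y v t u s q p.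
   L1 u s p lam, L2 u s p lam, A u s p are the data of the Lax matrix
   L(u,s;p,lam) = 1/sqrt(A) [[0, L1], [L2, 0]].  The square roots are
   determined up to sign; the Lax equation is required for a suitable
   choice of the square roots (independent of lam, as A is). *)
Definition is_Lax_matrix (par : C -> Prop)
  (X Y : C -> C -> C -> C -> C -> C -> C)
  (dom : C -> C -> C -> C -> C -> C -> Prop)
  (L1 L2 : C -> C -> C -> C -> 'M[C]_2) (A : C -> C -> C -> C) : Prop :=
  forall u s v t p q : C, par p -> par q ->
  dom u s v t p q -> dom v t u s q p ->
  forall u2 s2 v1 t1 : C,
  u2 = X u s v t p q -> s2 = Y u s v t p q ->
  v1 = X v t u s q p -> t1 = Y v t u s q p ->
  A u s p != 0 -> A v t q != 0 -> A u2 s2 p != 0 -> A v1 t1 q != 0 ->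
  exists r1 r2 r3 r4 : C,
    [/\ r1 ^+ 2 = A u2 s2 p, r2 ^+ 2 = A v t q, r3 ^+ 2 = A v1 t1 q,
        r4 ^+ 2 = A u s p &
        forall lam : C, par lam ->
          LaxM (L1 u2 s2 p lam) (L2 u2 s2 p lam) r1
            *m LaxM (L1 v t q lam) (L2 v t q lam) r2
          = LaxM (L1 v1 t1 q lam) (L2 v1 t1 q lam) r3
            *m LaxM (L1 u s p lam) (L2 u s p lam) r4].

Definition det_cond (par : C -> Prop) (L1 L2 : C -> C -> C -> C -> 'M[C]_2)
  (A : C -> C -> C -> C) : Prop :=
  exists c : C -> C -> C,
    (exists p lam : C, [/\ par p, par lam & c p lam != 0]) /\
    forall u s p lam : C, par p -> par lam ->
      \det (L1 u s p lam) = c p lam * A u s p /\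
      \det (L2 u s p lam) = c p lam * A u s p.

Definition anypar : C -> Prop := fun _ => True.
Definition nzpar : C -> Prop := fun x => x != 0.

Definition Q3a (pi : C) := pi - pi^-1.
Definition Q3c (pi pj : C) := pi / pj - pj / pi.
Definition Q3X (d : C) (Xi Yi Xj Yj pi pj : C) : C :=
  let a := Q3a pi in let b := Q3a pj in let c := Q3c pi pj in
  Yi - 2 * (d * a * b * c + (b * Yi - a * Xj) * (Yi - Yj) + c * Yi * Xj)
       / (2 * b * Yi - (a + b + c) * Yj - (a - b - c) * Xj).
Definition Q3Y (d : C) (Xi Yi Xj Yj pi pj : C) : C :=
  let a := Q3a pi in let b := Q3a pj in let c := Q3c pi pj in
  Xi - 2 * (d * a * b * c + (b * Xi - a * Xj) * (Xi + Yj) + c * Xi * Xj)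
       / (2 * b * Xi - (a - b + c) * Yj - (a + b - c) * Xj).
Definition Q3dom (Xi Yi Xj Yj pi pj : C) : Prop :=
  let a := Q3a pi in let b := Q3a pj in let c := Q3c pi pj in
  2 * b * Yi - (a + b + c) * Yj - (a - b - c) * Xj != 0 /\
  2 * b * Xi - (a - b + c) * Yj - (a + b - c) * Xj != 0.
Definition Q3L1 (d : C) (u s p lam : C) : 'M[C]_2 :=
  let La := lam - lam^-1 in let P := p - p^-1 in
  mx2 (La * (s - u) + (- P + lam / p - p / lam) * (s + u))
      (2 * La * (d * P * (lam / p - p / lam) + s * u))
      (- 2 * P)
      ((P + lam / p - p / lam) * (s - u) + La * (s + u)).
Definition Q3L2 (d : C) (u s p lam : C) : 'M[C]_2 :=
  let La := lam - lam^-1 in let P := p - p^-1 in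
  mx2 (- La * (s - u) - (P + lam / p - p / lam) * (s + u))
      (2 * La * (d * P * (p / lam - lam / p) + s * u))
      (2 * P)
      ((P + p / lam - lam / p) * (s - u) - La * (s + u)).
Definition Q3A (d : C) (u s p : C) : C :=
  4 * d * (1 - p ^+ 2) ^+ 2 + p * (1 + p) ^+ 2 * s ^+ 2
  - p * (1 - p) ^+ 2 * u ^+ 2.

Definition Q2X (Xi Yi Xj Yj pi pj : C) : C :=
  Xj + (pi - pj) * (pi * pj * (pi ^+ 2 - pi * pj + pj ^+ 2) + Yi * Yj
                    - pi * pj * (Yi - Yj + 2 * Xj))
       / (pi * Yj - pj * Yi + pi * pj * (pi - pj)).
Definition Q2Y (Xi Yi Xj Yj pi pj : C) : C :=
  pi * (pj * (pi - pj) * (pi ^+ 2 - pi * pj + pj ^+ 2 - Xi - Xj - Yj)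
        + Yj * (Xi - Xj))
     / ((pi * pj + Yj) * (pi - pj) - pj * (Xi - Xj)).
Definition Q2dom (Xi Yi Xj Yj pi pj : C) : Prop :=
  pi * Yj - pj * Yi + pi * pj * (pi - pj) != 0 /\
  (pi * pj + Yj) * (pi - pj) - pj * (Xi - Xj) != 0.
Definition Q2L1 (u s p lam : C) : 'M[C]_2 :=
  mx2 ((lam - p) * (lam * p - s) + p * u)
      (lam * (- lam * p + p ^+ 2 + s) * (p * (p - lam) - u)
        + lam ^+ 3 * p * (p - lam))
      p
      (lam * (p * (p - lam) - s)).
Definition Q2L2 (u s p lam : C) : 'M[C]_2 :=
  mx2 (lam * (- lam * p + p ^+ 2 + s))
      (lam * (- lam * p + p ^+ 2 - s) * (p * (lam - p) + u)
        + lam ^+ 3 * p * (lam - p))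
      (- p)
      ((lam - p) * (lam * p + s) + p * u).
Definition Q2A (u s p : C) : C := p ^+ 4 + s ^+ 2 - 2 * p ^+ 2 * u.

Definition Q1X (d : C) (Xi Yi Xj Yj pi pj : C) : C :=
  Xj + (pi - pj) * (d * pi * pj - Yi * Yj) / (pj * Yi - pi * Yj).
Definition Q1Y (d : C) (Xi Yi Xj Yj pi pj : C) : C :=
  pi * (d * pj * (pj - pi) + Yj * (Xi - Xj)) / (pi * Yj - pj * (Xi - Xj + Yj)).
Definition Q1dom (Xi Yi Xj Yj pi pj : C) : Prop :=
  pj * Yi - pi * Yj != 0 /\ pi * Yj - pj * (Xi - Xj + Yj) != 0.
Definition Q1L1 (d : C) (u s p lam : C) : 'M[C]_2 :=
  mx2 (- lam * s + p * (s + u)) (lam * (d * p * (lam - p) - s * u))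
      p (- lam * s).
Definition Q1L2 (d : C) (u s p lam : C) : 'M[C]_2 :=
  mx2 (lam * s) (lam * (d * p * (p - lam) - s * u))
      (- p) (lam * s - p * (s - u)).
Definition Q1A (d : C) (u s p : C) : C := d * p ^+ 2 - s ^+ 2.

Definition A1X (d : C) (Xi Yi Xj Yj pi pj : C) : C :=
  pi * (d * pj * (pi - pj) + Xj * (Yj - Yi)) / (pi * Xj - pj * (Yi + Xj - Yj)).
Definition A1Y (d : C) (Xi Yi Xj Yj pi pj : C) : C :=
  - Yj + (pi - pj) * (d * pi * pj - Xi * Xj) / (pi * Xj - pj * Xi).
Definition A1dom (Xi Yi Xj Yj pi pj : C) : Prop :=
  pi * Xj - pj * (Yi + Xj - Yj) != 0 /\ pi * Xj - pj * Xi != 0.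
Definition A1L1 (d : C) (u s p lam : C) : 'M[C]_2 :=
  mx2 (- lam * u) (lam * (d * p * (lam - p) + s * u))
      (- p) (p * (s - u) + lam * u).
Definition A1L2 (d : C) (u s p lam : C) : 'M[C]_2 :=
  mx2 (- lam * u + p * (s + u)) (lam * (d * p * (lam - p) - s * u))
      (- p) (lam * u).
Definition A1A (d : C) (u s p : C) : C := d * p ^+ 2 - u ^+ 2.

Definition H3X (d : C) (Xi Yi Xj Yj pi pj : C) : C :=
  ((pi - pj) * (2 * d * (pi + pj) - Yi * Yj) + ((pi + pj) * Yi - 2 * pi * Yj) * Xj)
  / (pj * (2 * Yi + Xj - Yj) - pi * (Xj + Yj)).
Definition H3Y (d : C) (Xi Yi Xj Yj pi pj : C) : C :=
  (2 * d * (pj ^+ 2 - pi ^+ 2) + pi * Xi * Yj - pi * Xj * (Xi + 2 * Yj)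
   + pj * Xi * (Xj + Yj))
  / (pi * (Xj + Yj) - pj * (2 * Xi - Xj + Yj)).
Definition H3dom (Xi Yi Xj Yj pi pj : C) : Prop :=
  pj * (2 * Yi + Xj - Yj) - pi * (Xj + Yj) != 0 /\
  pi * (Xj + Yj) - pj * (2 * Xi - Xj + Yj) != 0.
Definition H3L1 (d : C) (u s p lam : C) : 'M[C]_2 :=
  mx2 (lam * (s - u) - p * (s + u)) (2 * d * (p ^+ 2 - lam ^+ 2) + 2 * lam * s * u)
      (- 2 * p) (p * (s - u) + lam * (s + u)).
Definition H3L2 (d : C) (u s p lam : C) : 'M[C]_2 :=
  mx2 (lam * (s - u) + p * (s + u)) (2 * d * (p ^+ 2 - lam ^+ 2) - 2 * lam * s * u)
      (- 2 * p) (- p * (s - u) + lam * (s + u)).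
Definition H3A (d : C) (u s p : C) : C := 4 * d * p + u ^+ 2 - s ^+ 2.

Definition H2X (Xi Yi Xj Yj pi pj : C) : C :=
  Xj - (pi - pj) * (pi + pj + Yi - Yj + 2 * Xj) / (pi - pj + Yi - Yj).
Definition H2Y (Xi Yi Xj Yj pi pj : C) : C :=
  pi - pj - Yj - 2 * (pi - pj) * (pi + Xi) / (pi - pj + Xi - Xj).
Definition H2dom (Xi Yi Xj Yj pi pj : C) : Prop :=
  pi - pj + Yi - Yj != 0 /\ pi - pj + Xi - Xj != 0.
Definition H2L1 (u s p lam : C) : 'M[C]_2 :=
  mx2 (lam - p - u) (lam ^+ 2 + (s - p) * (p + u) - lam * (s - u))
      (- 1) (- lam + p + s).
Definition H2L2 (u s p lam : C) : 'M[C]_2 :=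
  mx2 (lam - p + s) (lam ^+ 2 - (p + s) * (p + u) + lam * (s + u))
      (- 1) (- lam + p + u).
Definition H2A (u s p : C) : C := p + u.

Definition H1X (Xi Yi Xj Yj pi pj : C) : C := Xj + (pi - pj) / (Yi - Yj).
Definition H1Y (Xi Yi Xj Yj pi pj : C) : C := - Yj + (pi - pj) / (Xi - Xj).
Definition H1dom (Xi Yi Xj Yj pi pj : C) : Prop := Yi - Yj != 0 /\ Xi - Xj != 0.
Definition H1L1 (u s p lam : C) : 'M[C]_2 :=
  mx2 (- u) (- lam + p + s * u) (- 1) s.
Definition H1L2 (u s p lam : C) : 'M[C]_2 :=
  mx2 s (- lam + p - s * u) (- 1) u.
Definition H1A (u s p : C) : C := 1.

End Defs.

(* Main.v *)
Require Import Defs.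
From HB Require Import structures.
From mathcomp Require Import all_boot all_order all_algebra.
From mathcomp Require Import ring.
Import Order.TTheory GRing.Theory Num.Theory.
Local Open Scope ring_scope.

Section Gen.
Variable C : numClosedFieldType.

Lemma mx2_mul (a b c d e f g h : C) :
  mx2 a b c d *m mx2 e f g h = mx2 (a*e+b*g) (a*f+b*h) (c*e+d*g) (c*f+d*h).
Proof.
apply/matrixP => i j; rewrite !mxE !big_ord_recr big_ord0 /= !mxE add0r.
by case: i => [[|[|//]] ?]; case: j => [[|[|//]] ?].
Qed.

Lemma mx2_scale (k a b c d : C) : k *: mx2 a b c d = mx2 (k*a) (k*b) (k*c) (k*d).
Proof.
by apply/matrixP => i j; rewrite !mxE; case: ifP => _; case: ifP.
Qed.

Lemma mx2_eq (a b c d a' b' c' d' : C) :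
  a = a' -> b = b' -> c = c' -> d = d' -> mx2 a b c d = mx2 a' b' c' d'.
Proof. by move=> -> -> -> ->. Qed.

Lemma det_mx2 (a b c d : C) : \det (mx2 a b c d) = a * d - b * c.
Proof.
rewrite (expand_det_row _ 0) !big_ord_recr big_ord0 /= add0r.
rewrite /cofactor !det_mx11 !mxE /=.
rewrite /bump /=.
rewrite expr0 expr1 !mul1r mulN1r.
by rewrite mulrN -mulrN [b * _]mulrC.
Qed.


Lemma LaxM_mul (P1 P2 Q1 Q2 : 'M[C]_2) (r1 r2 : C) :
  LaxM P1 P2 r1 *m LaxM Q1 Q2 r2 =
  (r1^-1 * r2^-1) *: block_mx (P1 *m Q2) 0 0 (P2 *m Q1).
Proof.
rewrite /LaxM -scalemxAl -scalemxAr scalerA mulmx_block.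
by rewrite !mulmx0 !mul0mx !addr0 !add0r.
Qed.

Lemma lax_generic (par : C -> Prop) (L1 L2 : C -> C -> C -> C -> 'M[C]_2)
  (A : C -> C -> C -> C) u s v t p q u2 s2 v1 t1 (k : C) :
  A v t q != 0 -> A v1 t1 q != 0 -> A u s p != 0 -> A u2 s2 p != 0 ->
  k ^+ 2 * A v1 t1 q * A u s p = A u2 s2 p * A v t q ->
  (forall lam, par lam ->
     L1 u2 s2 p lam *m L2 v t q lam = k *: (L1 v1 t1 q lam *m L2 u s p lam) /\
     L2 u2 s2 p lam *m L1 v t q lam = k *: (L2 v1 t1 q lam *m L1 u s p lam)) ->
  exists r1 r2 r3 r4 : C,
    [/\ r1 ^+ 2 = A u2 s2 p, r2 ^+ 2 = A v t q, r3 ^+ 2 = A v1 t1 q,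
        r4 ^+ 2 = A u s p &
        forall lam : C, par lam ->
          LaxM (L1 u2 s2 p lam) (L2 u2 s2 p lam) r1
            *m LaxM (L1 v t q lam) (L2 v t q lam) r2
          = LaxM (L1 v1 t1 q lam) (L2 v1 t1 q lam) r3
            *m LaxM (L1 u s p lam) (L2 u s p lam) r4].
Proof.
move=> Hv Hv1 Hu Hu2 Hk HL.
set r2 := sqrtC (A v t q); set r3 := sqrtC (A v1 t1 q); set r4 := sqrtC (A u s p).
have r2E : r2 ^+ 2 = A v t q by exact: sqrtCK.
have r3E : r3 ^+ 2 = A v1 t1 q by exact: sqrtCK.
have r4E : r4 ^+ 2 = A u s p by exact: sqrtCK.
have r2n : r2 != 0 by apply: contraNneq Hv => h; rewrite -r2E h expr0n.
have r3n : r3 != 0 by apply: contraNneq Hv1 => h; rewrite -r3E h expr0n.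
have r4n : r4 != 0 by apply: contraNneq Hu => h; rewrite -r4E h expr0n.
have kn : k != 0.
  apply: contraNneq Hu2 => h; apply/eqP.
  have : A u2 s2 p * A v t q = 0 by rewrite -Hk h expr0n !mul0r.
  by move/eqP; rewrite mulf_eq0 (negbTE Hv) orbF => /eqP.
exists (k * r3 * r4 / r2), r2, r3, r4; split => //.
  rewrite !exprMn exprVn r2E r3E r4E.
  apply: (mulIf Hv); rewrite -Hk divfK //; by rewrite mulrA.
move=> lam Hlam; rewrite !LaxM_mul; case: (HL lam Hlam) => -> ->.
have -> : forall X Y : 'M[C]_2, block_mx (k *: X) 0 0 (k *: Y) = k *: block_mx X 0 0 Y.
  by move=> X Y; rewrite scale_block_mx !scaler0.
rewrite scalerA; congr (_ *: _).
by field; rewrite r2n r3n r4n kn.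
Qed.




Lemma lax_generic2 (par : C -> Prop) (L1 L2 : C -> C -> C -> C -> 'M[C]_2)
  (A : C -> C -> C -> C) (c : C -> C -> C) u s v t p q u2 s2 v1 t1 (k lam0 : C) :
  (forall x y z lam, par z -> par lam -> \det (L1 x y z lam) = c z lam * A x y z) ->
  (forall x y z lam, par z -> par lam -> \det (L2 x y z lam) = c z lam * A x y z) ->
  par p -> par q -> par lam0 -> c p lam0 != 0 -> c q lam0 != 0 ->
  A v t q != 0 -> A v1 t1 q != 0 -> A u s p != 0 -> A u2 s2 p != 0 ->
  (forall lam, par lam ->
     L1 u2 s2 p lam *m L2 v t q lam = k *: (L1 v1 t1 q lam *m L2 u s p lam) /\
     L2 u2 s2 p lam *m L1 v t q lam = k *: (L2 v1 t1 q lam *m L1 u s p lam)) ->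
  exists r1 r2 r3 r4 : C,
    [/\ r1 ^+ 2 = A u2 s2 p, r2 ^+ 2 = A v t q, r3 ^+ 2 = A v1 t1 q,
        r4 ^+ 2 = A u s p &
        forall lam : C, par lam ->
          LaxM (L1 u2 s2 p lam) (L2 u2 s2 p lam) r1
            *m LaxM (L1 v t q lam) (L2 v t q lam) r2
          = LaxM (L1 v1 t1 q lam) (L2 v1 t1 q lam) r3
            *m LaxM (L1 u s p lam) (L2 u s p lam) r4].
Proof.
move=> d1 d2 pp pq pl cp cq Hv Hv1 Hu Hu2 HL.
apply: (@lax_generic par L1 L2 A u s v t p q u2 s2 v1 t1 k) => //.
case: (HL lam0 pl) => E _.
have := congr1 determinant E.
rewrite detZ !det_mulmx d1 // d2 // d1 // d2 //.
move=> E2; apply: (mulIf (mulf_neq0 cp cq)).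
have L : k^+2 * A v1 t1 q * A u s p * (c p lam0 * c q lam0) = k^+2 * (c q lam0 * A v1 t1 q * (c p lam0 * A u s p)) by ring.
have R : A u2 s2 p * A v t q * (c p lam0 * c q lam0) = c p lam0 * A u2 s2 p * (c q lam0 * A v t q) by ring.
by rewrite L R E2.
Qed.

Lemma avoid_list (xs : seq C) : exists lam : C, lam \notin xs.
Proof.
have [M [M0 HM]] : exists M : C, 0 <= M /\ forall x, x \in xs -> `|x| < M.
  elim: xs => [|y xs [M [M0 HM]]]; first by exists 0.
  exists (M + `|y| + 1); split; first by rewrite !addr_ge0.
  move=> x; rewrite inE => /orP [/eqP ->|/HM h].
    apply: (lt_le_trans (_ : `|y| < `|y| + 1)); first by rewrite ltrDl ltr01.
    by rewrite lerD2r lerDr.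
  apply: (lt_le_trans h); rewrite -addrA lerDl addr_ge0 //.
exists M; apply/negP => /HM; by rewrite ger0_norm // ltxx.
Qed.

Lemma nz_from (D E c : C) : D != 0 -> c != 0 -> E = c * D -> E != 0.
Proof. by move=> hD hc ->; rewrite mulf_neq0. Qed.


Ltac nzsplit := repeat match goal with |- is_true (_ && _) => apply/andP; split end.
Ltac nztry p q := match goal with h : is_true (?D != 0) |- is_true (?E != 0) =>
   first [ apply: (@nz_from D E 1 h); [done | field; nzsplit; done]
         | apply: (@nz_from D E (-1) h); [by rewrite oppr_eq0 oner_eq0 | field; nzsplit; done]
         | apply: (@nz_from D E (p * q) h); [by rewrite mulf_neq0 | field; nzsplit; done]
         | apply: (@nz_from D E (- (p * q)) h); [by rewrite oppr_eq0 mulf_neq0 | field; nzsplit; done]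
         | apply: (@nz_from D E p h); [done | field; nzsplit; done]
         | apply: (@nz_from D E q h); [done | field; nzsplit; done]
         | apply: (@nz_from D E (-p) h); [by rewrite oppr_eq0 | field; nzsplit; done]
         | apply: (@nz_from D E (-q) h); [by rewrite oppr_eq0 | field; nzsplit; done] ] end.
Ltac nzall p q := nzsplit; try done; repeat first [ done | nztry p q ].
Ltac hlsplit := repeat match goal with H : is_true (_ && _) |- _ => case/andP: H => ? ? end.
Ltac cneq := repeat match goal with
 | |- is_true (_ * _ != 0) => apply: mulf_neq0
 | |- is_true (_^-1 != 0) => rewrite invr_eq0
 | |- is_true (_ ^+ _ != 0) => apply: expf_neq0
 | |- is_true (_ - _ != 0) => rewrite subr_eq0; first [done | rewrite eq_sym; done]
 | |- is_true (_ + _ != 0) => rewrite addr_eq0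
 | |- is_true (2 != 0) => rewrite pnatr_eq0
 | |- is_true (- _ != 0) => rewrite oppr_eq0
 | |- is_true (1 != 0) => exact: oner_neq0
 end; try done.

Definition dX_H1 (u s v t p q : C) := s - t.
Definition dY_H1 (u s v t p q : C) := u - v.
Definition c_H1 : C -> C -> C := fun p lam => p - lam.
Definition k_H1 (u s v t p q : C) :=
  1 * dX_H1 v t u s q p * dY_H1 v t u s q p * @H1A C v t q
  / (dX_H1 u s v t p q * dY_H1 u s v t p q * @H1A C u s p).
Lemma H1_det1 u s p lam : anypar p -> anypar lam -> \det (@H1L1 C u s p lam) = c_H1 p lam * @H1A C u s p.
Proof. move=> hp hl; rewrite /H1L1 det_mx2 /c_H1 /H1A. ring. Qed.
Lemma H1_det2 u s p lam : anypar p -> anypar lam -> \det (@H1L2 C u s p lam) = c_H1 p lam * @H1A C u s p.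
Proof. move=> hp hl; rewrite /H1L2 det_mx2 /c_H1 /H1A. ring. Qed.
Lemma H1_lax : is_Lax_matrix (@anypar C) (@H1X C) (@H1Y C) (@H1dom C) (@H1L1 C) (@H1L2 C) (@H1A C).
Proof.
move=> u s v t p q Pp Pq [D1 D2] [D3 D4] u2 s2 v1 t1 -> -> -> -> Hu Hv Hu2 Hv1.
have [lam0 Hl] := avoid_list [:: p; q].
rewrite !inE !negb_or in Hl; hlsplit.

apply: (@lax_generic2 (@anypar C) (@H1L1 C) (@H1L2 C) (@H1A C) c_H1 u s v t p q _ _ _ _ (k_H1 u s v t p q) lam0).
- exact: H1_det1.
- exact: H1_det2.
- done.
- done.
- done.
- rewrite /c_H1; cneq.
- rewrite /c_H1; cneq.
- done.
- done.
- done.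
- done.
move=> lam Hlam;  rewrite /H1L1 /H1L2 !mx2_mul !mx2_scale.
move: D1 D2 D3 D4 Hu Hv; rewrite /H1dom /H1A  /= => D1 D2 D3 D4 Hu Hv.
split; apply: mx2_eq; rewrite /k_H1 /dX_H1 /dY_H1 /H1X /H1Y /H1A  /=; field; nzall p q.
Qed.
Lemma H1_detc : det_cond (@anypar C) (@H1L1 C) (@H1L2 C) (@H1A C).
Proof.
exists c_H1; split.
  have [lam0 Hl] := avoid_list [:: 1; 1].
  rewrite !inE !negb_or in Hl; hlsplit.
  exists 1, lam0; split; rewrite /c_H1 /anypar ?oner_neq0 //; cneq.
move=> u s p lam hp hl; split; [exact: H1_det1 | exact: H1_det2].
Qed.

Definition dX_H2 (u s v t p q : C) := p - q + s - t.
Definition dY_H2 (u s v t p q : C) := p - q + u - v.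
Definition c_H2 : C -> C -> C := fun p lam => 2 * (lam - p).
Definition k_H2 (u s v t p q : C) :=
  1 * dX_H2 v t u s q p * dY_H2 v t u s q p * @H2A C v t q
  / (dX_H2 u s v t p q * dY_H2 u s v t p q * @H2A C u s p).
Lemma H2_det1 u s p lam : anypar p -> anypar lam -> \det (@H2L1 C u s p lam) = c_H2 p lam * @H2A C u s p.
Proof. move=> hp hl; rewrite /H2L1 det_mx2 /c_H2 /H2A. ring. Qed.
Lemma H2_det2 u s p lam : anypar p -> anypar lam -> \det (@H2L2 C u s p lam) = c_H2 p lam * @H2A C u s p.
Proof. move=> hp hl; rewrite /H2L2 det_mx2 /c_H2 /H2A. ring. Qed.
Lemma H2_lax : is_Lax_matrix (@anypar C) (@H2X C) (@H2Y C) (@H2dom C) (@H2L1 C) (@H2L2 C) (@H2A C).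
Proof.
move=> u s v t p q Pp Pq [D1 D2] [D3 D4] u2 s2 v1 t1 -> -> -> -> Hu Hv Hu2 Hv1.
have [lam0 Hl] := avoid_list [:: p; q].
rewrite !inE !negb_or in Hl; hlsplit.

apply: (@lax_generic2 (@anypar C) (@H2L1 C) (@H2L2 C) (@H2A C) c_H2 u s v t p q _ _ _ _ (k_H2 u s v t p q) lam0).
- exact: H2_det1.
- exact: H2_det2.
- done.
- done.
- done.
- rewrite /c_H2; cneq.
- rewrite /c_H2; cneq.
- done.
- done.
- done.
- done.
move=> lam Hlam;  rewrite /H2L1 /H2L2 !mx2_mul !mx2_scale.
move: D1 D2 D3 D4 Hu Hv; rewrite /H2dom /H2A  /= => D1 D2 D3 D4 Hu Hv.
split; apply: mx2_eq; rewrite /k_H2 /dX_H2 /dY_H2 /H2X /H2Y /H2A  /=; field; nzall p q.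
Qed.
Lemma H2_detc : det_cond (@anypar C) (@H2L1 C) (@H2L2 C) (@H2A C).
Proof.
exists c_H2; split.
  have [lam0 Hl] := avoid_list [:: 1; 1].
  rewrite !inE !negb_or in Hl; hlsplit.
  exists 1, lam0; split; rewrite /c_H2 /anypar ?oner_neq0 //; cneq.
move=> u s p lam hp hl; split; [exact: H2_det1 | exact: H2_det2].
Qed.

Definition dX_H3 (u s v t p q : C) := q * (2 * s + v - t) - p * (v + t).
Definition dY_H3 (u s v t p q : C) := p * (v + t) - q * (2 * u - v + t).
Definition c_H3 : C -> C -> C := fun p lam => (lam - p) * (lam + p) * (-1).
Definition k_H3 (d : C) (u s v t p q : C) :=
  1 * dX_H3 v t u s q p * dY_H3 v t u s q p * @H3A C d v t q
  / (dX_H3 u s v t p q * dY_H3 u s v t p q * @H3A C d u s p).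
Lemma H3_det1 (d : C) u s p lam : anypar p -> anypar lam -> \det (@H3L1 C d u s p lam) = c_H3 p lam * @H3A C d u s p.
Proof. move=> hp hl; rewrite /H3L1 det_mx2 /c_H3 /H3A. ring. Qed.
Lemma H3_det2 (d : C) u s p lam : anypar p -> anypar lam -> \det (@H3L2 C d u s p lam) = c_H3 p lam * @H3A C d u s p.
Proof. move=> hp hl; rewrite /H3L2 det_mx2 /c_H3 /H3A. ring. Qed.
Lemma H3_lax (d : C) : is_Lax_matrix (@anypar C) (@H3X C d) (@H3Y C d) (@H3dom C) (@H3L1 C d) (@H3L2 C d) (@H3A C d).
Proof.
move=> u s v t p q Pp Pq [D1 D2] [D3 D4] u2 s2 v1 t1 -> -> -> -> Hu Hv Hu2 Hv1.
have [lam0 Hl] := avoid_list [:: p; q; -p; -q].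
rewrite !inE !negb_or in Hl; hlsplit.

apply: (@lax_generic2 (@anypar C) (@H3L1 C d) (@H3L2 C d) (@H3A C d) c_H3 u s v t p q _ _ _ _ (k_H3 d u s v t p q) lam0).
- exact: H3_det1.
- exact: H3_det2.
- done.
- done.
- done.
- rewrite /c_H3; cneq.
- rewrite /c_H3; cneq.
- done.
- done.
- done.
- done.
move=> lam Hlam;  rewrite /H3L1 /H3L2 !mx2_mul !mx2_scale.
move: D1 D2 D3 D4 Hu Hv; rewrite /H3dom /H3A  /= => D1 D2 D3 D4 Hu Hv.
split; apply: mx2_eq; rewrite /k_H3 /dX_H3 /dY_H3 /H3X /H3Y /H3A  /=; field; nzall p q.
Qed.
Lemma H3_detc (d : C) : det_cond (@anypar C) (@H3L1 C d) (@H3L2 C d) (@H3A C d).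
Proof.
exists c_H3; split.
  have [lam0 Hl] := avoid_list [:: 1; 1; -1; -1].
  rewrite !inE !negb_or in Hl; hlsplit.
  exists 1, lam0; split; rewrite /c_H3 /anypar ?oner_neq0 //; cneq.
move=> u s p lam hp hl; split; [exact: H3_det1 | exact: H3_det2].
Qed.

Definition dX_Q1 (u s v t p q : C) := q * s - p * t.
Definition dY_Q1 (u s v t p q : C) := p * t - q * (u - v + t).
Definition c_Q1 : C -> C -> C := fun p lam => lam * (p - lam).
Definition k_Q1 (d : C) (u s v t p q : C) :=
  p / q * dX_Q1 v t u s q p * dY_Q1 v t u s q p * @Q1A C d v t q
  / (dX_Q1 u s v t p q * dY_Q1 u s v t p q * @Q1A C d u s p).
Lemma Q1_det1 (d : C) u s p lam : anypar p -> anypar lam -> \det (@Q1L1 C d u s p lam) = c_Q1 p lam * @Q1A C d u s p.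
Proof. move=> hp hl; rewrite /Q1L1 det_mx2 /c_Q1 /Q1A. ring. Qed.
Lemma Q1_det2 (d : C) u s p lam : anypar p -> anypar lam -> \det (@Q1L2 C d u s p lam) = c_Q1 p lam * @Q1A C d u s p.
Proof. move=> hp hl; rewrite /Q1L2 det_mx2 /c_Q1 /Q1A. ring. Qed.
Lemma Q1_lax (d : C) : is_Lax_matrix (@anypar C) (@Q1X C d) (@Q1Y C d) (@Q1dom C) (@Q1L1 C d) (@Q1L2 C d) (@Q1A C d).
Proof.
move=> u s v t p q Pp Pq [D1 D2] [D3 D4] u2 s2 v1 t1 -> -> -> -> Hu Hv Hu2 Hv1.
have [lam0 Hl] := avoid_list [:: 0; p; q].
rewrite !inE !negb_or in Hl; hlsplit.
have hq : q != 0 by apply: contraNneq Hv1 => E; apply/eqP; rewrite E /Q1A /Q1Y !mul0r; ring.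
apply: (@lax_generic2 (@anypar C) (@Q1L1 C d) (@Q1L2 C d) (@Q1A C d) c_Q1 u s v t p q _ _ _ _ (k_Q1 d u s v t p q) lam0).
- exact: Q1_det1.
- exact: Q1_det2.
- done.
- done.
- done.
- rewrite /c_Q1; cneq.
- rewrite /c_Q1; cneq.
- done.
- done.
- done.
- done.
move=> lam Hlam;  rewrite /Q1L1 /Q1L2 !mx2_mul !mx2_scale.
move: D1 D2 D3 D4 Hu Hv; rewrite /Q1dom /Q1A  /= => D1 D2 D3 D4 Hu Hv.
split; apply: mx2_eq; rewrite /k_Q1 /dX_Q1 /dY_Q1 /Q1X /Q1Y /Q1A  /=; field; nzall p q.
Qed.
Lemma Q1_detc (d : C) : det_cond (@anypar C) (@Q1L1 C d) (@Q1L2 C d) (@Q1A C d).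
Proof.
exists c_Q1; split.
  have [lam0 Hl] := avoid_list [:: 0; 1; 1].
  rewrite !inE !negb_or in Hl; hlsplit.
  exists 1, lam0; split; rewrite /c_Q1 /anypar ?oner_neq0 //; cneq.
move=> u s p lam hp hl; split; [exact: Q1_det1 | exact: Q1_det2].
Qed.

Definition dX_A1 (u s v t p q : C) := p * v - q * (s + v - t).
Definition dY_A1 (u s v t p q : C) := p * v - q * u.
Definition c_A1 : C -> C -> C := fun p lam => lam * (lam - p).
Definition k_A1 (d : C) (u s v t p q : C) :=
  p / q * dX_A1 v t u s q p * dY_A1 v t u s q p * @A1A C d v t q
  / (dX_A1 u s v t p q * dY_A1 u s v t p q * @A1A C d u s p).
Lemma A1_det1 (d : C) u s p lam : anypar p -> anypar lam -> \det (@A1L1 C d u s p lam) = c_A1 p lam * @A1A C d u s p.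
Proof. move=> hp hl; rewrite /A1L1 det_mx2 /c_A1 /A1A. ring. Qed.
Lemma A1_det2 (d : C) u s p lam : anypar p -> anypar lam -> \det (@A1L2 C d u s p lam) = c_A1 p lam * @A1A C d u s p.
Proof. move=> hp hl; rewrite /A1L2 det_mx2 /c_A1 /A1A. ring. Qed.
Lemma A1_lax (d : C) : is_Lax_matrix (@anypar C) (@A1X C d) (@A1Y C d) (@A1dom C) (@A1L1 C d) (@A1L2 C d) (@A1A C d).
Proof.
move=> u s v t p q Pp Pq [D1 D2] [D3 D4] u2 s2 v1 t1 -> -> -> -> Hu Hv Hu2 Hv1.
have [lam0 Hl] := avoid_list [:: 0; p; q].
rewrite !inE !negb_or in Hl; hlsplit.
have hq : q != 0 by apply: contraNneq Hv1 => E; apply/eqP; rewrite E /A1A /A1X !mul0r; ring.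
apply: (@lax_generic2 (@anypar C) (@A1L1 C d) (@A1L2 C d) (@A1A C d) c_A1 u s v t p q _ _ _ _ (k_A1 d u s v t p q) lam0).
- exact: A1_det1.
- exact: A1_det2.
- done.
- done.
- done.
- rewrite /c_A1; cneq.
- rewrite /c_A1; cneq.
- done.
- done.
- done.
- done.
move=> lam Hlam;  rewrite /A1L1 /A1L2 !mx2_mul !mx2_scale.
move: D1 D2 D3 D4 Hu Hv; rewrite /A1dom /A1A  /= => D1 D2 D3 D4 Hu Hv.
split; apply: mx2_eq; rewrite /k_A1 /dX_A1 /dY_A1 /A1X /A1Y /A1A  /=; field; nzall p q.
Qed.
Lemma A1_detc (d : C) : det_cond (@anypar C) (@A1L1 C d) (@A1L2 C d) (@A1A C d).
Proof.
exists c_A1; split.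
  have [lam0 Hl] := avoid_list [:: 0; 1; 1].
  rewrite !inE !negb_or in Hl; hlsplit.
  exists 1, lam0; split; rewrite /c_A1 /anypar ?oner_neq0 //; cneq.
move=> u s p lam hp hl; split; [exact: A1_det1 | exact: A1_det2].
Qed.

Definition dX_Q2 (u s v t p q : C) := p * t - q * s + p * q * (p - q).
Definition dY_Q2 (u s v t p q : C) := (p * q + t) * (p - q) - q * (u - v).
Definition c_Q2 : C -> C -> C := fun p lam => lam * (lam - p).
Definition k_Q2 (u s v t p q : C) :=
  p / q * dX_Q2 v t u s q p * dY_Q2 v t u s q p * @Q2A C v t q
  / (dX_Q2 u s v t p q * dY_Q2 u s v t p q * @Q2A C u s p).
Lemma Q2_det1 u s p lam : anypar p -> anypar lam -> \det (@Q2L1 C u s p lam) = c_Q2 p lam * @Q2A C u s p.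
Proof. move=> hp hl; rewrite /Q2L1 det_mx2 /c_Q2 /Q2A. ring. Qed.
Lemma Q2_det2 u s p lam : anypar p -> anypar lam -> \det (@Q2L2 C u s p lam) = c_Q2 p lam * @Q2A C u s p.
Proof. move=> hp hl; rewrite /Q2L2 det_mx2 /c_Q2 /Q2A. ring. Qed.
Lemma Q2_lax : is_Lax_matrix (@anypar C) (@Q2X C) (@Q2Y C) (@Q2dom C) (@Q2L1 C) (@Q2L2 C) (@Q2A C).
Proof.
move=> u s v t p q Pp Pq [D1 D2] [D3 D4] u2 s2 v1 t1 -> -> -> -> Hu Hv Hu2 Hv1.
have [lam0 Hl] := avoid_list [:: 0; p; q].
rewrite !inE !negb_or in Hl; hlsplit.
have hq : q != 0 by apply: contraNneq Hv1 => E; apply/eqP; rewrite E /Q2A /Q2Y !mul0r; ring.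
apply: (@lax_generic2 (@anypar C) (@Q2L1 C) (@Q2L2 C) (@Q2A C) c_Q2 u s v t p q _ _ _ _ (k_Q2 u s v t p q) lam0).
- exact: Q2_det1.
- exact: Q2_det2.
- done.
- done.
- done.
- rewrite /c_Q2; cneq.
- rewrite /c_Q2; cneq.
- done.
- done.
- done.
- done.
move=> lam Hlam;  rewrite /Q2L1 /Q2L2 !mx2_mul !mx2_scale.
move: D1 D2 D3 D4 Hu Hv; rewrite /Q2dom /Q2A  /= => D1 D2 D3 D4 Hu Hv.
split; apply: mx2_eq; rewrite /k_Q2 /dX_Q2 /dY_Q2 /Q2X /Q2Y /Q2A  /=; field; nzall p q.
Qed.
Lemma Q2_detc : det_cond (@anypar C) (@Q2L1 C) (@Q2L2 C) (@Q2A C).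
Proof.
exists c_Q2; split.
  have [lam0 Hl] := avoid_list [:: 0; 1; 1].
  rewrite !inE !negb_or in Hl; hlsplit.
  exists 1, lam0; split; rewrite /c_Q2 /anypar ?oner_neq0 //; cneq.
move=> u s p lam hp hl; split; [exact: Q2_det1 | exact: Q2_det2].
Qed.

Definition dX_Q3 (u s v t p q : C) := let a := Q3a p in let b := Q3a q in let c := Q3c p q in 2 * b * s - (a + b + c) * t - (a - b - c) * v.
Definition dY_Q3 (u s v t p q : C) := let a := Q3a p in let b := Q3a q in let c := Q3c p q in 2 * b * u - (a - b + c) * t - (a + b - c) * v.
Definition c_Q3 : C -> C -> C := fun p lam => (lam - p) * (lam + p) * (lam - 1) * (lam + 1) / (lam^+2 * p^+3).
Definition k_Q3 (d : C) (u s v t p q : C) :=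
  p * (p^+2 - 1) / (q * (q^+2 - 1)) * dX_Q3 v t u s q p * dY_Q3 v t u s q p * @Q3A C d v t q
  / (dX_Q3 u s v t p q * dY_Q3 u s v t p q * @Q3A C d u s p).
Lemma Q3_det1 (d : C) u s p lam : nzpar p -> nzpar lam -> \det (@Q3L1 C d u s p lam) = c_Q3 p lam * @Q3A C d u s p.
Proof. move=> hp hl; rewrite /Q3L1 det_mx2 /c_Q3 /Q3A. move: hp hl; rewrite /nzpar => hp hl; field; nzall p lam. Qed.
Lemma Q3_det2 (d : C) u s p lam : nzpar p -> nzpar lam -> \det (@Q3L2 C d u s p lam) = c_Q3 p lam * @Q3A C d u s p.
Proof. move=> hp hl; rewrite /Q3L2 det_mx2 /c_Q3 /Q3A. move: hp hl; rewrite /nzpar => hp hl; field; nzall p lam. Qed.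

Definition PX3 (u s v t p q : C) := 2 * (q^+2 - 1) * p * s - ((p^+2 - 1) * q + (q^+2 - 1) * p + (p^+2 - q^+2)) * t
   - ((p^+2 - 1) * q - (q^+2 - 1) * p - (p^+2 - q^+2)) * v.
Definition PY3 (u s v t p q : C) := 2 * (q^+2 - 1) * p * u - ((p^+2 - 1) * q - (q^+2 - 1) * p + (p^+2 - q^+2)) * t
   - ((p^+2 - 1) * q + (q^+2 - 1) * p - (p^+2 - q^+2)) * v.
Definition NX3 (d u s v t p q : C) := d * (p^+2 - 1) * (q^+2 - 1) * (p^+2 - q^+2)
   + p * q * ((q^+2 - 1) * p * s - (p^+2 - 1) * q * v) * (s - t) + p * q * (p^+2 - q^+2) * s * v.
Definition NY3 (d u s v t p q : C) := d * (p^+2 - 1) * (q^+2 - 1) * (p^+2 - q^+2)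
   + p * q * ((q^+2 - 1) * p * u - (p^+2 - 1) * q * v) * (u + t) + p * q * (p^+2 - q^+2) * u * v.
Definition Un3 (d u s v t p q : C) := p * q * PX3 u s v t p q * s - 2 * NX3 d u s v t p q.
Definition Du3 (u s v t p q : C) := p * q * PX3 u s v t p q.
Definition Sn3 (d u s v t p q : C) := p * q * PY3 u s v t p q * u - 2 * NY3 d u s v t p q.
Definition Ds3 (u s v t p q : C) := p * q * PY3 u s v t p q.
Definition k3 (d u s v t p q : C) := p * (p^+2 - 1) * PX3 v t u s q p * PY3 v t u s q p * Q3A d v t q /
  (q * (q^+2 - 1) * PX3 u s v t p q * PY3 u s v t p q * Q3A d u s p).
Definition bil (a b c e U S : C) := a + b * U + c * S + e * U * S.
Definition bilH (a b c e Un Du Sn Ds : C) := a * Du * Ds + b * Un * Ds + c * Sn * Du + e * Un * Sn.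
Lemma bil_frac a b c e Un Du Sn Ds : Du != 0 -> Ds != 0 ->
  bil a b c e (Un / Du) (Sn / Ds) = bilH a b c e Un Du Sn Ds / (Du * Ds).
Proof. by move=> h1 h2; rewrite /bil /bilH; field; rewrite h1 h2. Qed.

Lemma assemble3 (HE HF X Y X' Y' Au Av p q mE mF : C) :
  p != 0 -> q != 0 -> q^+2 - 1 != 0 -> X != 0 -> Y != 0 -> X' != 0 -> Y' != 0 -> Au != 0 ->
  mE != 0 -> mF != 0 ->
  HE * (q * (q^+2 - 1) * Au * mF) = p * (p^+2 - 1) * Av * HF * mE ->
  HE / ((p * q * X) * (p * q * Y)) / mE =
  p * (p^+2 - 1) * X' * Y' * Av / (q * (q^+2 - 1) * X * Y * Au) * (HF / ((q * p * X') * (q * p * Y')) / mF).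
Proof.
move=> hp hq hq2 hX hY hX' hY' hA hmE hmF E.
have HE' : HE = p * (p^+2 - 1) * Av * HF * mE / (q * (q^+2 - 1) * Au * mF).
  by rewrite -E; field; rewrite hq hq2 hA hmF.
by rewrite HE'; field; rewrite hp hq hq2 hX hY hX' hY' hA hmE hmF.
Qed.

Lemma mx2_ext (M N : 'M[C]_2) :
  M 0 0 = N 0 0 -> M 0 1 = N 0 1 -> M 1 0 = N 1 0 -> M 1 1 = N 1 1 -> M = N.
Proof.
move=> h00 h01 h10 h11; apply/matrixP => i j.
have Ei : i = 0 \/ i = 1 by case: i => [[|[|//]] Hi]; [left|right]; apply/val_inj.
have Ej : j = 0 \/ j = 1 by case: j => [[|[|//]] Hj]; [left|right]; apply/val_inj.
by case: Ei => ->; case: Ej => ->.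
Qed.

Lemma scale_entry (k : C) (M : 'M[C]_2) i j : (k *: M) i j = k * M i j.
Proof. by rewrite mxE. Qed.

Definition M3_12 (d U S p v t q l : C) := Q3L1 d U S p l *m Q3L2 d v t q l.
Definition M3_21 (d U S p v t q l : C) := Q3L2 d U S p l *m Q3L1 d v t q l.

Definition Q3a_12_00 (d v t p q l : C) : C := (- 4 * l^+2 * d + 4 * l^+4 * d + 4 * q^+2 * l^+2 * d - 4 * q^+2 * l^+4 * d + 4 * p^+2 * d - 4 * p^+2 * l^+4 * d - 4 * p^+2 * q^+2 * d + 4 * p^+2 * q^+2 * l^+4 * d - 4 * p^+4 * d + 4 * p^+4 * l^+2 * d + 4 * p^+4 * q^+2 * d - 4 * p^+4 * q^+2 * l^+2 * d).
Definition Q3b_12_00 (d v t p q l : C) : C := (t * p * l^+2 - t * p * l^+4 + t * p * q * l + t * p * q * l^+2 - t * p * q * l^+3 - t * p * q * l^+4 + t * p * q^+2 * l - t * p * q^+2 * l^+3 + t * p^+2 * l - t * p^+2 * l^+2 - t * p^+2 * l^+3 + t * p^+2 * l^+4 + t * p^+2 * q - 2 * t * p^+2 * q * l^+2 + t * p^+2 * q * l^+4 + t * p^+2 * q^+2 - t * p^+2 * q^+2 * l - t * p^+2 * q^+2 * l^+2 + t * p^+2 * q^+2 * l^+3 - t * p^+3 * l + t * p^+3 * l^+3 - t * p^+3 * q - t * p^+3 * q * l + t * p^+3 * q * l^+2 + t * p^+3 * q * l^+3 - t * p^+3 * q^+2 + t * p^+3 * q^+2 * l^+2 + v * p * l^+2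 - v * p * l^+4 - v * p * q * l - v * p * q * l^+2 + v * p * q * l^+3 + v * p * q * l^+4 + v * p * q^+2 * l - v * p * q^+2 * l^+3 + v * p^+2 * l - v * p^+2 * l^+2 - v * p^+2 * l^+3 + v * p^+2 * l^+4 - v * p^+2 * q + 2 * v * p^+2 * q * l^+2 - v * p^+2 * q * l^+4 + v * p^+2 * q^+2 - v * p^+2 * q^+2 * l - v * p^+2 * q^+2 * l^+2 + v * p^+2 * q^+2 * l^+3 - v * p^+3 * l + v * p^+3 * l^+3 + v * p^+3 * q + v * p^+3 * q * l - v * p^+3 * q * l^+2 - v * p^+3 * q * l^+3 - v * p^+3 * q^+2 + v * p^+3 * q^+2 * l^+2).
Definition Q3c_12_00 (d v t p q l : C) : C := (t * p * l^+2 - t * p * l^+4 + t * p * q * l + t * p * q * l^+2 - t * p * q * l^+3 - t * p * q * l^+4 + t * p * q^+2 * l - t * p * q^+2 * l^+3 - t * p^+2 * l + t * p^+2 * l^+2 + t * p^+2 * l^+3 - t * p^+2 * l^+4 - t * p^+2 * q + 2 * t * p^+2 * q * l^+2 - t * p^+2 * q * l^+4 - t * p^+2 * q^+2 + t * p^+2 * q^+2 * l + t * p^+2 * q^+2 * l^+2 - t * p^+2 * q^+2 * l^+3 - t * p^+3 * l + t * p^+3 * l^+3 - t * p^+3 * q - t * p^+3 * q * l + t * p^+3 * q * l^+2 + t * p^+3 * q * l^+3 - t * p^+3 * q^+2 + t * p^+3 * q^+2 * l^+2 + v * p * l^+2 - v * p * l^+4 - v * p * q * l - v * p * q * l^+2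 + v * p * q * l^+3 + v * p * q * l^+4 + v * p * q^+2 * l - v * p * q^+2 * l^+3 - v * p^+2 * l + v * p^+2 * l^+2 + v * p^+2 * l^+3 - v * p^+2 * l^+4 + v * p^+2 * q - 2 * v * p^+2 * q * l^+2 + v * p^+2 * q * l^+4 - v * p^+2 * q^+2 + v * p^+2 * q^+2 * l + v * p^+2 * q^+2 * l^+2 - v * p^+2 * q^+2 * l^+3 - v * p^+3 * l + v * p^+3 * l^+3 + v * p^+3 * q + v * p^+3 * q * l - v * p^+3 * q * l^+2 - v * p^+3 * q * l^+3 - v * p^+3 * q^+2 + v * p^+3 * q^+2 * l^+2).
Definition Q3e_12_00 (d v t p q l : C) : C := (4 * p^+2 * l - 4 * p^+2 * l^+3 - 4 * p^+2 * q^+2 * l + 4 * p^+2 * q^+2 * l^+3).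
Definition Q3m_12_00 (p q l : C) : C := l^+2 * p^+2 * q^+1.
Lemma Q3form_12_00 d U S v t p q l : l != 0 -> p != 0 -> q != 0 ->
  (M3_12 d U S p v t q l) 0 0 = bil (Q3a_12_00 d v t p q l) (Q3b_12_00 d v t p q l) (Q3c_12_00 d v t p q l) (Q3e_12_00 d v t p q l) U S / Q3m_12_00 p q l.
Proof.
move=> hl hp hq; rewrite /M3_12 /Q3L1 /Q3L2 mx2_mul !mxE /= /bil /Q3a_12_00 /Q3b_12_00 /Q3c_12_00 /Q3e_12_00 /Q3m_12_00.
by field; rewrite hl hp hq.
Qed.
Lemma Q3big_12_00 d u s v t p q l :
  bilH (Q3a_12_00 d v t p q l) (Q3b_12_00 d v t p q l) (Q3c_12_00 d v t p q l) (Q3e_12_00 d v t p q l)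
     (Un3 d u s v t p q) (Du3 u s v t p q) (Sn3 d u s v t p q) (Ds3 u s v t p q)
   * (q * (q^+2 - 1) * Q3A d u s p * Q3m_12_00 q p l)
  = p * (p^+2 - 1) * Q3A d v t q *
  bilH (Q3a_12_00 d u s q p l) (Q3b_12_00 d u s q p l) (Q3c_12_00 d u s q p l) (Q3e_12_00 d u s q p l)
     (Un3 d v t u s q p) (Du3 v t u s q p) (Sn3 d v t u s q p) (Ds3 v t u s q p) * Q3m_12_00 p q l.
Proof.
rewrite /bilH /Q3a_12_00 /Q3b_12_00 /Q3c_12_00 /Q3e_12_00 /Q3m_12_00 /Un3 /Du3 /Sn3 /Ds3 /NX3 /NY3 /PX3 /PY3 /Q3A.
ring.
Qed.
Lemma Q3entry_12_00 d u s v t p q l : l != 0 -> p != 0 -> q != 0 -> q^+2 - 1 != 0 ->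
  PX3 u s v t p q != 0 -> PY3 u s v t p q != 0 -> PX3 v t u s q p != 0 -> PY3 v t u s q p != 0 ->
  Q3A d u s p != 0 ->
  (M3_12 d (Un3 d u s v t p q / Du3 u s v t p q) (Sn3 d u s v t p q / Ds3 u s v t p q) p v t q l) 0 0 =
  k3 d u s v t p q * (M3_12 d (Un3 d v t u s q p / Du3 v t u s q p) (Sn3 d v t u s q p / Ds3 v t u s q p) q u s p l) 0 0.
Proof.
move=> hl hp hq hq2 h1 h2 h3 h4 hA.
have n1 : Du3 u s v t p q != 0 by rewrite /Du3 !mulf_neq0.
have n2 : Ds3 u s v t p q != 0 by rewrite /Ds3 !mulf_neq0.
have n3 : Du3 v t u s q p != 0 by rewrite /Du3 !mulf_neq0.
have n4 : Ds3 v t u s q p != 0 by rewrite /Ds3 !mulf_neq0.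
rewrite !Q3form_12_00 // !bil_frac // /k3 /Du3 /Ds3.
apply: assemble3 => //.
- by rewrite /Q3m_12_00; cneq.
- by rewrite /Q3m_12_00; cneq.
exact: Q3big_12_00.
Qed.
Definition Q3a_12_01 (d v t p q l : C) : C := (- 2 * t * q * l^+3 * d - 2 * t * q * l^+4 * d + 2 * t * q * l^+5 * d + 2 * t * q * l^+6 * d + 2 * t * q^+2 * l^+2 * d - 4 * t * q^+2 * l^+4 * d + 2 * t * q^+2 * l^+6 * d + 2 * t * q^+3 * l^+2 * d + 2 * t * q^+3 * l^+3 * d - 2 * t * q^+3 * l^+4 * d - 2 * t * q^+3 * l^+5 * d + 2 * t * p^+2 * q * l * d + 2 * t * p^+2 * q * l^+2 * d - 2 * t * p^+2 * q * l^+5 * d - 2 * t * p^+2 * q * l^+6 * d - 2 * t * p^+2 * q^+2 * d + 2 * t * p^+2 * q^+2 * l^+2 * d + 2 * t * p^+2 * q^+2 * l^+4 * d - 2 * t * p^+2 * q^+2 * l^+6 * d - 2 * t * p^+2 * q^+3 * d - 2 * t * p^+2 * q^+3 * l * d + 2 * t * p^+2 * q^+3 * l^+4 * d + 2 * t * p^+2 * q^+3 * l^+5 * d - 2 * t * p^+4 * q * l * d - 2 * t * p^+4 * q * l^+2 * d + 2 * t * p^+4 * q * l^+3 * d + 2 * t * p^+4 * q * l^+4 * d + 2 * t * p^+4 * q^+2 * d - 4 * t * p^+4 * q^+2 * l^+2 * d + 2 * t * p^+4 * q^+2 * l^+4 * d + 2 * t * p^+4 * q^+3 * d + 2 * t *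 p^+4 * q^+3 * l * d - 2 * t * p^+4 * q^+3 * l^+2 * d - 2 * t * p^+4 * q^+3 * l^+3 * d + 2 * v * q * l^+3 * d + 2 * v * q * l^+4 * d - 2 * v * q * l^+5 * d - 2 * v * q * l^+6 * d + 2 * v * q^+2 * l^+2 * d - 4 * v * q^+2 * l^+4 * d + 2 * v * q^+2 * l^+6 * d - 2 * v * q^+3 * l^+2 * d - 2 * v * q^+3 * l^+3 * d + 2 * v * q^+3 * l^+4 * d + 2 * v * q^+3 * l^+5 * d - 2 * v * p^+2 * q * l * d - 2 * v * p^+2 * q * l^+2 * d + 2 * v * p^+2 * q * l^+5 * d + 2 * v * p^+2 * q * l^+6 * d - 2 * v * p^+2 * q^+2 * d + 2 * v * p^+2 * q^+2 * l^+2 * d + 2 * v * p^+2 * q^+2 * l^+4 * d - 2 * v * p^+2 * q^+2 * l^+6 * d + 2 * v * p^+2 * q^+3 * d + 2 * v * p^+2 * q^+3 * l * d - 2 * v * p^+2 * q^+3 * l^+4 * d - 2 * v * p^+2 * q^+3 * l^+5 * d + 2 * v * p^+4 * q * l * d + 2 * v * p^+4 * q * l^+2 * d - 2 * v * p^+4 * q * l^+3 * d - 2 * v * p^+4 * q * l^+4 * d + 2 * v * p^+4 * q^+2 * d - 4 * v * p^+4 * q^+2 * l^+2 * d + 2 * v * p^+4 * q^+2 * l^+4 * d - 2 * v * p^+4 * q^+3 * d - 2 * v * p^+4 * q^+3 * l * d + 2 * v * p^+4 * q^+3 * l^+2 * d + 2 * v * p^+4 * q^+3 * l^+3 * d).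
Definition Q3b_12_01 (d v t p q l : C) : C := (- 2 * p * l^+3 * d - 2 * p * l^+4 * d + 2 * p * l^+5 * d + 2 * p * l^+6 * d + 2 * p * q^+2 * l * d + 2 * p * q^+2 * l^+2 * d - 2 * p * q^+2 * l^+5 * d - 2 * p * q^+2 * l^+6 * d - 2 * p * q^+4 * l * d - 2 * p * q^+4 * l^+2 * d + 2 * p * q^+4 * l^+3 * d + 2 * p * q^+4 * l^+4 * d - 2 * p^+2 * l^+2 * d + 4 * p^+2 * l^+4 * d - 2 * p^+2 * l^+6 * d + 2 * p^+2 * q^+2 * d - 2 * p^+2 * q^+2 * l^+2 * d - 2 * p^+2 * q^+2 * l^+4 * d + 2 * p^+2 * q^+2 * l^+6 * d - 2 * p^+2 * q^+4 * d + 4 * p^+2 * q^+4 * l^+2 * d - 2 * p^+2 * q^+4 * l^+4 * d + 2 * p^+3 * l^+2 * d + 2 * p^+3 * l^+3 * d - 2 * p^+3 * l^+4 * d - 2 * p^+3 * l^+5 * d - 2 * p^+3 * q^+2 * d - 2 * p^+3 * q^+2 * l * d + 2 * p^+3 * q^+2 * l^+4 * d + 2 * p^+3 * q^+2 * l^+5 * d + 2 * p^+3 * q^+4 * d + 2 * p^+3 * q^+4 * l * d - 2 * p^+3 * q^+4 * l^+2 * d - 2 * p^+3 * q^+4 * l^+3 * d - 2 * v * t * p * q^+2 * l^+2 - 2 * v * t * p * q^+2 * l^+3 + 2 * v * t * p * q^+2 * l^+4 + 2 * v * t * p * q^+2 * l^+5 - 2 * v * t * p^+2 * q^+2 * l +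 4 * v * t * p^+2 * q^+2 * l^+3 - 2 * v * t * p^+2 * q^+2 * l^+5 + 2 * v * t * p^+3 * q^+2 * l + 2 * v * t * p^+3 * q^+2 * l^+2 - 2 * v * t * p^+3 * q^+2 * l^+3 - 2 * v * t * p^+3 * q^+2 * l^+4).
Definition Q3c_12_01 (d v t p q l : C) : C := (- 2 * p * l^+3 * d - 2 * p * l^+4 * d + 2 * p * l^+5 * d + 2 * p * l^+6 * d + 2 * p * q^+2 * l * d + 2 * p * q^+2 * l^+2 * d - 2 * p * q^+2 * l^+5 * d - 2 * p * q^+2 * l^+6 * d - 2 * p * q^+4 * l * d - 2 * p * q^+4 * l^+2 * d + 2 * p * q^+4 * l^+3 * d + 2 * p * q^+4 * l^+4 * d + 2 * p^+2 * l^+2 * d - 4 * p^+2 * l^+4 * d + 2 * p^+2 * l^+6 * d - 2 * p^+2 * q^+2 * d + 2 * p^+2 * q^+2 * l^+2 * d + 2 * p^+2 * q^+2 * l^+4 * d - 2 * p^+2 * q^+2 * l^+6 * d + 2 * p^+2 * q^+4 * d - 4 * p^+2 * q^+4 * l^+2 * d + 2 * p^+2 * q^+4 * l^+4 * d + 2 * p^+3 * l^+2 * d + 2 * p^+3 * l^+3 * d - 2 * p^+3 * l^+4 * d - 2 * p^+3 * l^+5 * d - 2 * p^+3 * q^+2 * d - 2 * p^+3 * q^+2 * l * d + 2 * p^+3 * q^+2 * l^+4 * d + 2 * p^+3 * q^+2 * l^+5 * d + 2 * p^+3 * q^+4 * d + 2 * p^+3 * q^+4 * l * d - 2 * p^+3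 * q^+4 * l^+2 * d - 2 * p^+3 * q^+4 * l^+3 * d - 2 * v * t * p * q^+2 * l^+2 - 2 * v * t * p * q^+2 * l^+3 + 2 * v * t * p * q^+2 * l^+4 + 2 * v * t * p * q^+2 * l^+5 + 2 * v * t * p^+2 * q^+2 * l - 4 * v * t * p^+2 * q^+2 * l^+3 + 2 * v * t * p^+2 * q^+2 * l^+5 + 2 * v * t * p^+3 * q^+2 * l + 2 * v * t * p^+3 * q^+2 * l^+2 - 2 * v * t * p^+3 * q^+2 * l^+3 - 2 * v * t * p^+3 * q^+2 * l^+4).
Definition Q3e_12_01 (d v t p q l : C) : C := (2 * t * p^+2 * q * l^+2 + 2 * t * p^+2 * q * l^+3 - 2 * t * p^+2 * q * l^+4 - 2 * t * p^+2 * q * l^+5 - 2 * t * p^+2 * q^+2 * l + 4 * t * p^+2 * q^+2 * l^+3 - 2 * t * p^+2 * q^+2 * l^+5 - 2 * t * p^+2 * q^+3 * l - 2 * t * p^+2 * q^+3 * l^+2 + 2 * t * p^+2 * q^+3 * l^+3 + 2 * t * p^+2 * q^+3 * l^+4 - 2 * v * p^+2 * q * l^+2 - 2 * v * p^+2 * q * l^+3 + 2 * v * p^+2 * q * l^+4 + 2 * v * p^+2 * q * l^+5 - 2 * v * p^+2 * q^+2 * l + 4 * v * p^+2 * q^+2 * l^+3 - 2 * v * p^+2 * q^+2 * l^+5 + 2 * v * p^+2 * q^+3 * l + 2 * v * p^+2 * q^+3 * l^+2 - 2 * v * p^+2 * q^+3 * l^+3 - 2 * v * p^+2 * q^+3 *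 l^+4).
Definition Q3m_12_01 (p q l : C) : C := l^+3 * p^+2 * q^+2.
Lemma Q3form_12_01 d U S v t p q l : l != 0 -> p != 0 -> q != 0 ->
  (M3_12 d U S p v t q l) 0 1 = bil (Q3a_12_01 d v t p q l) (Q3b_12_01 d v t p q l) (Q3c_12_01 d v t p q l) (Q3e_12_01 d v t p q l) U S / Q3m_12_01 p q l.
Proof.
move=> hl hp hq; rewrite /M3_12 /Q3L1 /Q3L2 mx2_mul !mxE /= /bil /Q3a_12_01 /Q3b_12_01 /Q3c_12_01 /Q3e_12_01 /Q3m_12_01.
by field; rewrite hl hp hq.
Qed.
Lemma Q3big_12_01 d u s v t p q l :
  bilH (Q3a_12_01 d v t p q l) (Q3b_12_01 d v t p q l) (Q3c_12_01 d v t p q l) (Q3e_12_01 d v t p q l)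
     (Un3 d u s v t p q) (Du3 u s v t p q) (Sn3 d u s v t p q) (Ds3 u s v t p q)
   * (q * (q^+2 - 1) * Q3A d u s p * Q3m_12_01 q p l)
  = p * (p^+2 - 1) * Q3A d v t q *
  bilH (Q3a_12_01 d u s q p l) (Q3b_12_01 d u s q p l) (Q3c_12_01 d u s q p l) (Q3e_12_01 d u s q p l)
     (Un3 d v t u s q p) (Du3 v t u s q p) (Sn3 d v t u s q p) (Ds3 v t u s q p) * Q3m_12_01 p q l.
Proof.
rewrite /bilH /Q3a_12_01 /Q3b_12_01 /Q3c_12_01 /Q3e_12_01 /Q3m_12_01 /Un3 /Du3 /Sn3 /Ds3 /NX3 /NY3 /PX3 /PY3 /Q3A.
ring.
Qed.
Lemma Q3entry_12_01 d u s v t p q l : l != 0 -> p != 0 -> q != 0 -> q^+2 - 1 != 0 ->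
  PX3 u s v t p q != 0 -> PY3 u s v t p q != 0 -> PX3 v t u s q p != 0 -> PY3 v t u s q p != 0 ->
  Q3A d u s p != 0 ->
  (M3_12 d (Un3 d u s v t p q / Du3 u s v t p q) (Sn3 d u s v t p q / Ds3 u s v t p q) p v t q l) 0 1 =
  k3 d u s v t p q * (M3_12 d (Un3 d v t u s q p / Du3 v t u s q p) (Sn3 d v t u s q p / Ds3 v t u s q p) q u s p l) 0 1.
Proof.
move=> hl hp hq hq2 h1 h2 h3 h4 hA.
have n1 : Du3 u s v t p q != 0 by rewrite /Du3 !mulf_neq0.
have n2 : Ds3 u s v t p q != 0 by rewrite /Ds3 !mulf_neq0.
have n3 : Du3 v t u s q p != 0 by rewrite /Du3 !mulf_neq0.
have n4 : Ds3 v t u s q p != 0 by rewrite /Ds3 !mulf_neq0.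
rewrite !Q3form_12_01 // !bil_frac // /k3 /Du3 /Ds3.
apply: assemble3 => //.
- by rewrite /Q3m_12_01; cneq.
- by rewrite /Q3m_12_01; cneq.
exact: Q3big_12_01.
Qed.
Definition Q3a_12_10 (d v t p q l : C) : C := (2 * t * l - 2 * t * l^+2 + 2 * t * q - 2 * t * q * l^+2 + 2 * t * q^+2 - 2 * t * q^+2 * l - 2 * t * p^+2 * l + 2 * t * p^+2 * l^+2 - 2 * t * p^+2 * q + 2 * t * p^+2 * q * l^+2 - 2 * t * p^+2 * q^+2 + 2 * t * p^+2 * q^+2 * l + 2 * v * l - 2 * v * l^+2 - 2 * v * q + 2 * v * q * l^+2 + 2 * v * q^+2 - 2 * v * q^+2 * l - 2 * v * p^+2 * l + 2 * v * p^+2 * l^+2 + 2 * v * p^+2 * q - 2 * v * p^+2 * q * l^+2 - 2 * v * p^+2 * q^+2 + 2 * v * p^+2 * q^+2 * l).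
Definition Q3b_12_10 (d v t p q l : C) : C := (- 2 * l + 2 * l^+2 + 2 * q^+2 * l - 2 * q^+2 * l^+2 + 2 * p - 2 * p * l^+2 - 2 * p * q^+2 + 2 * p * q^+2 * l^+2 - 2 * p^+2 + 2 * p^+2 * l + 2 * p^+2 * q^+2 - 2 * p^+2 * q^+2 * l).
Definition Q3c_12_10 (d v t p q l : C) : C := (2 * l - 2 * l^+2 - 2 * q^+2 * l + 2 * q^+2 * l^+2 + 2 * p - 2 * p * l^+2 - 2 * p * q^+2 + 2 * p * q^+2 * l^+2 + 2 * p^+2 - 2 * p^+2 * l - 2 * p^+2 * q^+2 + 2 * p^+2 * q^+2 * l).
Definition Q3e_12_10 (d v t p q l : C) : C := 0.
Definition Q3m_12_10 (p q l : C) : C := l^+1 * p^+1 * q^+1.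
Lemma Q3form_12_10 d U S v t p q l : l != 0 -> p != 0 -> q != 0 ->
  (M3_12 d U S p v t q l) 1 0 = bil (Q3a_12_10 d v t p q l) (Q3b_12_10 d v t p q l) (Q3c_12_10 d v t p q l) (Q3e_12_10 d v t p q l) U S / Q3m_12_10 p q l.
Proof.
move=> hl hp hq; rewrite /M3_12 /Q3L1 /Q3L2 mx2_mul !mxE /= /bil /Q3a_12_10 /Q3b_12_10 /Q3c_12_10 /Q3e_12_10 /Q3m_12_10.
by field; rewrite hl hp hq.
Qed.
Lemma Q3big_12_10 d u s v t p q l :
  bilH (Q3a_12_10 d v t p q l) (Q3b_12_10 d v t p q l) (Q3c_12_10 d v t p q l) (Q3e_12_10 d v t p q l)
     (Un3 d u s v t p q) (Du3 u s v t p q) (Sn3 d u s v t p q) (Ds3 u s v t p q)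
   * (q * (q^+2 - 1) * Q3A d u s p * Q3m_12_10 q p l)
  = p * (p^+2 - 1) * Q3A d v t q *
  bilH (Q3a_12_10 d u s q p l) (Q3b_12_10 d u s q p l) (Q3c_12_10 d u s q p l) (Q3e_12_10 d u s q p l)
     (Un3 d v t u s q p) (Du3 v t u s q p) (Sn3 d v t u s q p) (Ds3 v t u s q p) * Q3m_12_10 p q l.
Proof.
rewrite /bilH /Q3a_12_10 /Q3b_12_10 /Q3c_12_10 /Q3e_12_10 /Q3m_12_10 /Un3 /Du3 /Sn3 /Ds3 /NX3 /NY3 /PX3 /PY3 /Q3A.
ring.
Qed.
Lemma Q3entry_12_10 d u s v t p q l : l != 0 -> p != 0 -> q != 0 -> q^+2 - 1 != 0 ->
  PX3 u s v t p q != 0 -> PY3 u s v t p q != 0 -> PX3 v t u s q p != 0 -> PY3 v t u s q p != 0 ->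
  Q3A d u s p != 0 ->
  (M3_12 d (Un3 d u s v t p q / Du3 u s v t p q) (Sn3 d u s v t p q / Ds3 u s v t p q) p v t q l) 1 0 =
  k3 d u s v t p q * (M3_12 d (Un3 d v t u s q p / Du3 v t u s q p) (Sn3 d v t u s q p / Ds3 v t u s q p) q u s p l) 1 0.
Proof.
move=> hl hp hq hq2 h1 h2 h3 h4 hA.
have n1 : Du3 u s v t p q != 0 by rewrite /Du3 !mulf_neq0.
have n2 : Ds3 u s v t p q != 0 by rewrite /Ds3 !mulf_neq0.
have n3 : Du3 v t u s q p != 0 by rewrite /Du3 !mulf_neq0.
have n4 : Ds3 v t u s q p != 0 by rewrite /Ds3 !mulf_neq0.
rewrite !Q3form_12_10 // !bil_frac // /k3 /Du3 /Ds3.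
apply: assemble3 => //.
- by rewrite /Q3m_12_10; cneq.
- by rewrite /Q3m_12_10; cneq.
exact: Q3big_12_10.
Qed.
Definition Q3a_12_11 (d v t p q l : C) : C := (- 4 * l^+2 * d + 4 * l^+4 * d + 4 * q^+2 * d - 4 * q^+2 * l^+4 * d - 4 * q^+4 * d + 4 * q^+4 * l^+2 * d + 4 * p^+2 * l^+2 * d - 4 * p^+2 * l^+4 * d - 4 * p^+2 * q^+2 * d + 4 * p^+2 * q^+2 * l^+4 * d + 4 * p^+2 * q^+4 * d - 4 * p^+2 * q^+4 * l^+2 * d - 4 * v * t * q^+2 * l + 4 * v * t * q^+2 * l^+3 + 4 * v * t * p^+2 * q^+2 * l - 4 * v * t * p^+2 * q^+2 * l^+3).
Definition Q3b_12_11 (d v t p q l : C) : C := (- t * q * l^+2 + t * q * l^+4 + t * q^+2 * l - t * q^+2 * l^+2 - t * q^+2 * l^+3 + t * q^+2 * l^+4 + t * q^+3 * l - t * q^+3 * l^+3 + t * p * q * l + t * p * q * l^+2 - t * p * q * l^+3 - t * p * q * l^+4 - t * p * q^+2 + 2 * t * p * q^+2 * l^+2 - t * p * q^+2 * l^+4 - t * p * q^+3 - t * p * q^+3 * l + t * p * q^+3 * l^+2 + t * p * q^+3 * l^+3 - t * p^+2 * q * l + t * p^+2 * q * l^+3 + t * p^+2 * q^+2 - t * p^+2 * q^+2 * l - t * p^+2 * q^+2 * l^+2 + t * p^+2 * q^+2 * l^+3 + t * p^+2 * q^+3 - t * p^+2 * q^+3 * l^+2 + v * q * l^+2 - v * q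 * l^+4 + v * q^+2 * l - v * q^+2 * l^+2 - v * q^+2 * l^+3 + v * q^+2 * l^+4 - v * q^+3 * l + v * q^+3 * l^+3 - v * p * q * l - v * p * q * l^+2 + v * p * q * l^+3 + v * p * q * l^+4 - v * p * q^+2 + 2 * v * p * q^+2 * l^+2 - v * p * q^+2 * l^+4 + v * p * q^+3 + v * p * q^+3 * l - v * p * q^+3 * l^+2 - v * p * q^+3 * l^+3 + v * p^+2 * q * l - v * p^+2 * q * l^+3 + v * p^+2 * q^+2 - v * p^+2 * q^+2 * l - v * p^+2 * q^+2 * l^+2 + v * p^+2 * q^+2 * l^+3 - v * p^+2 * q^+3 + v * p^+2 * q^+3 * l^+2).
Definition Q3c_12_11 (d v t p q l : C) : C := (t * q * l^+2 - t * q * l^+4 - t * q^+2 * l + t * q^+2 * l^+2 + t * q^+2 * l^+3 - t * q^+2 * l^+4 - t * q^+3 * l + t * q^+3 * l^+3 + t * p * q * l + t * p * q * l^+2 - t * p * q * l^+3 - t * p * q * l^+4 - t * p * q^+2 + 2 * t * p * q^+2 * l^+2 - t * p * q^+2 * l^+4 - t * p * q^+3 - t * p * q^+3 * l + t * p * q^+3 * l^+2 + t * p * q^+3 * l^+3 + t * p^+2 * q * l - t * p^+2 * q * l^+3 - t * p^+2 * q^+2 + t * p^+2 * q^+2 * l + t * p^+2 * q^+2 * l^+2 - t * p^+2 * q^+2 * l^+3 - t * p^+2 * q^+3 + t * p^+2 * q^+3 * l^+2 - v * q * l^+2 + v * q * l^+4 - v * q^+2 * l + v * q^+2 * l^+2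 + v * q^+2 * l^+3 - v * q^+2 * l^+4 + v * q^+3 * l - v * q^+3 * l^+3 - v * p * q * l - v * p * q * l^+2 + v * p * q * l^+3 + v * p * q * l^+4 - v * p * q^+2 + 2 * v * p * q^+2 * l^+2 - v * p * q^+2 * l^+4 + v * p * q^+3 + v * p * q^+3 * l - v * p * q^+3 * l^+2 - v * p * q^+3 * l^+3 - v * p^+2 * q * l + v * p^+2 * q * l^+3 - v * p^+2 * q^+2 + v * p^+2 * q^+2 * l + v * p^+2 * q^+2 * l^+2 - v * p^+2 * q^+2 * l^+3 + v * p^+2 * q^+3 - v * p^+2 * q^+3 * l^+2).
Definition Q3e_12_11 (d v t p q l : C) : C := 0.
Definition Q3m_12_11 (p q l : C) : C := l^+2 * p^+1 * q^+2.
Lemma Q3form_12_11 d U S v t p q l : l != 0 -> p != 0 -> q != 0 ->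
  (M3_12 d U S p v t q l) 1 1 = bil (Q3a_12_11 d v t p q l) (Q3b_12_11 d v t p q l) (Q3c_12_11 d v t p q l) (Q3e_12_11 d v t p q l) U S / Q3m_12_11 p q l.
Proof.
move=> hl hp hq; rewrite /M3_12 /Q3L1 /Q3L2 mx2_mul !mxE /= /bil /Q3a_12_11 /Q3b_12_11 /Q3c_12_11 /Q3e_12_11 /Q3m_12_11.
by field; rewrite hl hp hq.
Qed.
Lemma Q3big_12_11 d u s v t p q l :
  bilH (Q3a_12_11 d v t p q l) (Q3b_12_11 d v t p q l) (Q3c_12_11 d v t p q l) (Q3e_12_11 d v t p q l)
     (Un3 d u s v t p q) (Du3 u s v t p q) (Sn3 d u s v t p q) (Ds3 u s v t p q)
   * (q * (q^+2 - 1) * Q3A d u s p * Q3m_12_11 q p l)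
  = p * (p^+2 - 1) * Q3A d v t q *
  bilH (Q3a_12_11 d u s q p l) (Q3b_12_11 d u s q p l) (Q3c_12_11 d u s q p l) (Q3e_12_11 d u s q p l)
     (Un3 d v t u s q p) (Du3 v t u s q p) (Sn3 d v t u s q p) (Ds3 v t u s q p) * Q3m_12_11 p q l.
Proof.
rewrite /bilH /Q3a_12_11 /Q3b_12_11 /Q3c_12_11 /Q3e_12_11 /Q3m_12_11 /Un3 /Du3 /Sn3 /Ds3 /NX3 /NY3 /PX3 /PY3 /Q3A.
ring.
Qed.
Lemma Q3entry_12_11 d u s v t p q l : l != 0 -> p != 0 -> q != 0 -> q^+2 - 1 != 0 ->
  PX3 u s v t p q != 0 -> PY3 u s v t p q != 0 -> PX3 v t u s q p != 0 -> PY3 v t u s q p != 0 ->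
  Q3A d u s p != 0 ->
  (M3_12 d (Un3 d u s v t p q / Du3 u s v t p q) (Sn3 d u s v t p q / Ds3 u s v t p q) p v t q l) 1 1 =
  k3 d u s v t p q * (M3_12 d (Un3 d v t u s q p / Du3 v t u s q p) (Sn3 d v t u s q p / Ds3 v t u s q p) q u s p l) 1 1.
Proof.
move=> hl hp hq hq2 h1 h2 h3 h4 hA.
have n1 : Du3 u s v t p q != 0 by rewrite /Du3 !mulf_neq0.
have n2 : Ds3 u s v t p q != 0 by rewrite /Ds3 !mulf_neq0.
have n3 : Du3 v t u s q p != 0 by rewrite /Du3 !mulf_neq0.
have n4 : Ds3 v t u s q p != 0 by rewrite /Ds3 !mulf_neq0.
rewrite !Q3form_12_11 // !bil_frac // /k3 /Du3 /Ds3.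
apply: assemble3 => //.
- by rewrite /Q3m_12_11; cneq.
- by rewrite /Q3m_12_11; cneq.
exact: Q3big_12_11.
Qed.
Definition Q3a_21_00 (d v t p q l : C) : C := (- 4 * l^+2 * d + 4 * l^+4 * d + 4 * q^+2 * l^+2 * d - 4 * q^+2 * l^+4 * d + 4 * p^+2 * d - 4 * p^+2 * l^+4 * d - 4 * p^+2 * q^+2 * d + 4 * p^+2 * q^+2 * l^+4 * d - 4 * p^+4 * d + 4 * p^+4 * l^+2 * d + 4 * p^+4 * q^+2 * d - 4 * p^+4 * q^+2 * l^+2 * d).
Definition Q3b_21_00 (d v t p q l : C) : C := (t * p * l^+2 - t * p * l^+4 - t * p * q * l + t * p * q * l^+2 + t * p * q * l^+3 - t * p * q * l^+4 - t * p * q^+2 * l + t * p * q^+2 * l^+3 - t * p^+2 * l - t * p^+2 * l^+2 + t * p^+2 * l^+3 + t * p^+2 * l^+4 + t * p^+2 * q - 2 * t * p^+2 * q * l^+2 + t * p^+2 * q * l^+4 + t * p^+2 * q^+2 + t * p^+2 * q^+2 * l - t * p^+2 * q^+2 * l^+2 - t * p^+2 * q^+2 * l^+3 + t * p^+3 * l - t * p^+3 * l^+3 - t * p^+3 * q + t * p^+3 * q * l + t * p^+3 * q * l^+2 - t * p^+3 * q * l^+3 - t * p^+3 * q^+2 + t * p^+3 * q^+2 * l^+2 + v * p * l^+2 - v * p * l^+4 + v * p * q * l - v * p * q * l^+2 - v * p * q * l^+3 + v * p * q * l^+4 - v * p * q^+2 * l + v * p * q^+2 * l^+3 - v * p^+2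 * l - v * p^+2 * l^+2 + v * p^+2 * l^+3 + v * p^+2 * l^+4 - v * p^+2 * q + 2 * v * p^+2 * q * l^+2 - v * p^+2 * q * l^+4 + v * p^+2 * q^+2 + v * p^+2 * q^+2 * l - v * p^+2 * q^+2 * l^+2 - v * p^+2 * q^+2 * l^+3 + v * p^+3 * l - v * p^+3 * l^+3 + v * p^+3 * q - v * p^+3 * q * l - v * p^+3 * q * l^+2 + v * p^+3 * q * l^+3 - v * p^+3 * q^+2 + v * p^+3 * q^+2 * l^+2).
Definition Q3c_21_00 (d v t p q l : C) : C := (t * p * l^+2 - t * p * l^+4 - t * p * q * l + t * p * q * l^+2 + t * p * q * l^+3 - t * p * q * l^+4 - t * p * q^+2 * l + t * p * q^+2 * l^+3 + t * p^+2 * l + t * p^+2 * l^+2 - t * p^+2 * l^+3 - t * p^+2 * l^+4 - t * p^+2 * q + 2 * t * p^+2 * q * l^+2 - t * p^+2 * q * l^+4 - t * p^+2 * q^+2 - t * p^+2 * q^+2 * l + t * p^+2 * q^+2 * l^+2 + t * p^+2 * q^+2 * l^+3 + t * p^+3 * l - t * p^+3 * l^+3 - t * p^+3 * q + t * p^+3 * q * l + t * p^+3 * q * l^+2 - t * p^+3 * q * l^+3 - t * p^+3 * q^+2 + t * p^+3 * q^+2 * l^+2 + v * p * l^+2 - v * p * l^+4 + v * p * q * l - v * p * q * l^+2 - v * p * q * l^+3 + v * p * q * l^+4 - v * p * q^+2 * l + v * p * q^+2 * l^+3 + v * p^+2 * l + v * p^+2 * l^+2 - v * p^+2 * l^+3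 - v * p^+2 * l^+4 + v * p^+2 * q - 2 * v * p^+2 * q * l^+2 + v * p^+2 * q * l^+4 - v * p^+2 * q^+2 - v * p^+2 * q^+2 * l + v * p^+2 * q^+2 * l^+2 + v * p^+2 * q^+2 * l^+3 + v * p^+3 * l - v * p^+3 * l^+3 + v * p^+3 * q - v * p^+3 * q * l - v * p^+3 * q * l^+2 + v * p^+3 * q * l^+3 - v * p^+3 * q^+2 + v * p^+3 * q^+2 * l^+2).
Definition Q3e_21_00 (d v t p q l : C) : C := (- 4 * p^+2 * l + 4 * p^+2 * l^+3 + 4 * p^+2 * q^+2 * l - 4 * p^+2 * q^+2 * l^+3).
Definition Q3m_21_00 (p q l : C) : C := l^+2 * p^+2 * q^+1.
Lemma Q3form_21_00 d U S v t p q l : l != 0 -> p != 0 -> q != 0 ->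
  (M3_21 d U S p v t q l) 0 0 = bil (Q3a_21_00 d v t p q l) (Q3b_21_00 d v t p q l) (Q3c_21_00 d v t p q l) (Q3e_21_00 d v t p q l) U S / Q3m_21_00 p q l.
Proof.
move=> hl hp hq; rewrite /M3_21 /Q3L1 /Q3L2 mx2_mul !mxE /= /bil /Q3a_21_00 /Q3b_21_00 /Q3c_21_00 /Q3e_21_00 /Q3m_21_00.
by field; rewrite hl hp hq.
Qed.
Lemma Q3big_21_00 d u s v t p q l :
  bilH (Q3a_21_00 d v t p q l) (Q3b_21_00 d v t p q l) (Q3c_21_00 d v t p q l) (Q3e_21_00 d v t p q l)
     (Un3 d u s v t p q) (Du3 u s v t p q) (Sn3 d u s v t p q) (Ds3 u s v t p q)
   * (q * (q^+2 - 1) * Q3A d u s p * Q3m_21_00 q p l)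
  = p * (p^+2 - 1) * Q3A d v t q *
  bilH (Q3a_21_00 d u s q p l) (Q3b_21_00 d u s q p l) (Q3c_21_00 d u s q p l) (Q3e_21_00 d u s q p l)
     (Un3 d v t u s q p) (Du3 v t u s q p) (Sn3 d v t u s q p) (Ds3 v t u s q p) * Q3m_21_00 p q l.
Proof.
rewrite /bilH /Q3a_21_00 /Q3b_21_00 /Q3c_21_00 /Q3e_21_00 /Q3m_21_00 /Un3 /Du3 /Sn3 /Ds3 /NX3 /NY3 /PX3 /PY3 /Q3A.
ring.
Qed.
Lemma Q3entry_21_00 d u s v t p q l : l != 0 -> p != 0 -> q != 0 -> q^+2 - 1 != 0 ->
  PX3 u s v t p q != 0 -> PY3 u s v t p q != 0 -> PX3 v t u s q p != 0 -> PY3 v t u s q p != 0 ->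
  Q3A d u s p != 0 ->
  (M3_21 d (Un3 d u s v t p q / Du3 u s v t p q) (Sn3 d u s v t p q / Ds3 u s v t p q) p v t q l) 0 0 =
  k3 d u s v t p q * (M3_21 d (Un3 d v t u s q p / Du3 v t u s q p) (Sn3 d v t u s q p / Ds3 v t u s q p) q u s p l) 0 0.
Proof.
move=> hl hp hq hq2 h1 h2 h3 h4 hA.
have n1 : Du3 u s v t p q != 0 by rewrite /Du3 !mulf_neq0.
have n2 : Ds3 u s v t p q != 0 by rewrite /Ds3 !mulf_neq0.
have n3 : Du3 v t u s q p != 0 by rewrite /Du3 !mulf_neq0.
have n4 : Ds3 v t u s q p != 0 by rewrite /Ds3 !mulf_neq0.
rewrite !Q3form_21_00 // !bil_frac // /k3 /Du3 /Ds3.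
apply: assemble3 => //.
- by rewrite /Q3m_21_00; cneq.
- by rewrite /Q3m_21_00; cneq.
exact: Q3big_21_00.
Qed.
Definition Q3a_21_01 (d v t p q l : C) : C := (2 * t * q * l^+3 * d - 2 * t * q * l^+4 * d - 2 * t * q * l^+5 * d + 2 * t * q * l^+6 * d + 2 * t * q^+2 * l^+2 * d - 4 * t * q^+2 * l^+4 * d + 2 * t * q^+2 * l^+6 * d + 2 * t * q^+3 * l^+2 * d - 2 * t * q^+3 * l^+3 * d - 2 * t * q^+3 * l^+4 * d + 2 * t * q^+3 * l^+5 * d - 2 * t * p^+2 * q * l * d + 2 * t * p^+2 * q * l^+2 * d + 2 * t * p^+2 * q * l^+5 * d - 2 * t * p^+2 * q * l^+6 * d - 2 * t * p^+2 * q^+2 * d + 2 * t * p^+2 * q^+2 * l^+2 * d + 2 * t * p^+2 * q^+2 * l^+4 * d - 2 * t * p^+2 * q^+2 * l^+6 * d - 2 * t * p^+2 * q^+3 * d + 2 * t * p^+2 * q^+3 * l * d + 2 * t * p^+2 * q^+3 * l^+4 * d - 2 * t * p^+2 * q^+3 * l^+5 * d + 2 * t * p^+4 * q * l * d - 2 * t * p^+4 * q * l^+2 * d - 2 * t * p^+4 * q * l^+3 * d + 2 * t * p^+4 * q * l^+4 * d + 2 * t * p^+4 * q^+2 * d - 4 * t * p^+4 * q^+2 * l^+2 * d + 2 * t * p^+4 * q^+2 * l^+4 * d + 2 * t * p^+4 * q^+3 * d - 2 * t * p^+4 * q^+3 * l * d - 2 * t * p^+4 * q^+3 * l^+2 *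 d + 2 * t * p^+4 * q^+3 * l^+3 * d - 2 * v * q * l^+3 * d + 2 * v * q * l^+4 * d + 2 * v * q * l^+5 * d - 2 * v * q * l^+6 * d + 2 * v * q^+2 * l^+2 * d - 4 * v * q^+2 * l^+4 * d + 2 * v * q^+2 * l^+6 * d - 2 * v * q^+3 * l^+2 * d + 2 * v * q^+3 * l^+3 * d + 2 * v * q^+3 * l^+4 * d - 2 * v * q^+3 * l^+5 * d + 2 * v * p^+2 * q * l * d - 2 * v * p^+2 * q * l^+2 * d - 2 * v * p^+2 * q * l^+5 * d + 2 * v * p^+2 * q * l^+6 * d - 2 * v * p^+2 * q^+2 * d + 2 * v * p^+2 * q^+2 * l^+2 * d + 2 * v * p^+2 * q^+2 * l^+4 * d - 2 * v * p^+2 * q^+2 * l^+6 * d + 2 * v * p^+2 * q^+3 * d - 2 * v * p^+2 * q^+3 * l * d - 2 * v * p^+2 * q^+3 * l^+4 * d + 2 * v * p^+2 * q^+3 * l^+5 * d - 2 * v * p^+4 * q * l * d + 2 * v * p^+4 * q * l^+2 * d + 2 * v * p^+4 * q * l^+3 * d - 2 * v * p^+4 * q * l^+4 * d + 2 * v * p^+4 * q^+2 * d - 4 * v * p^+4 * q^+2 * l^+2 * d + 2 * v * p^+4 * q^+2 * l^+4 * d - 2 * v * p^+4 * q^+3 * d + 2 * v * p^+4 * q^+3 * l * d + 2 * v * p^+4 * q^+3 * l^+2 * d - 2 * v * p^+4 * q^+3 * l^+3 * d).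
Definition Q3b_21_01 (d v t p q l : C) : C := (2 * p * l^+3 * d - 2 * p * l^+4 * d - 2 * p * l^+5 * d + 2 * p * l^+6 * d - 2 * p * q^+2 * l * d + 2 * p * q^+2 * l^+2 * d + 2 * p * q^+2 * l^+5 * d - 2 * p * q^+2 * l^+6 * d + 2 * p * q^+4 * l * d - 2 * p * q^+4 * l^+2 * d - 2 * p * q^+4 * l^+3 * d + 2 * p * q^+4 * l^+4 * d - 2 * p^+2 * l^+2 * d + 4 * p^+2 * l^+4 * d - 2 * p^+2 * l^+6 * d + 2 * p^+2 * q^+2 * d - 2 * p^+2 * q^+2 * l^+2 * d - 2 * p^+2 * q^+2 * l^+4 * d + 2 * p^+2 * q^+2 * l^+6 * d - 2 * p^+2 * q^+4 * d + 4 * p^+2 * q^+4 * l^+2 * d - 2 * p^+2 * q^+4 * l^+4 * d + 2 * p^+3 * l^+2 * d - 2 * p^+3 * l^+3 * d - 2 * p^+3 * l^+4 * d + 2 * p^+3 * l^+5 * d - 2 * p^+3 * q^+2 * d + 2 * p^+3 * q^+2 * l * d + 2 * p^+3 * q^+2 * l^+4 * d - 2 * p^+3 * q^+2 * l^+5 * d + 2 * p^+3 * q^+4 * d - 2 * p^+3 * q^+4 * l * d - 2 * p^+3 * q^+4 * l^+2 * d + 2 * p^+3 * q^+4 * l^+3 * d - 2 * v * t * p * q^+2 * l^+2 + 2 * v * t * p * q^+2 * l^+3 + 2 * v * t * p * q^+2 * l^+4 - 2 * v * t * p * q^+2 * l^+5 + 2 * v * t * p^+2 * q^+2 * l - 4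 * v * t * p^+2 * q^+2 * l^+3 + 2 * v * t * p^+2 * q^+2 * l^+5 - 2 * v * t * p^+3 * q^+2 * l + 2 * v * t * p^+3 * q^+2 * l^+2 + 2 * v * t * p^+3 * q^+2 * l^+3 - 2 * v * t * p^+3 * q^+2 * l^+4).
Definition Q3c_21_01 (d v t p q l : C) : C := (2 * p * l^+3 * d - 2 * p * l^+4 * d - 2 * p * l^+5 * d + 2 * p * l^+6 * d - 2 * p * q^+2 * l * d + 2 * p * q^+2 * l^+2 * d + 2 * p * q^+2 * l^+5 * d - 2 * p * q^+2 * l^+6 * d + 2 * p * q^+4 * l * d - 2 * p * q^+4 * l^+2 * d - 2 * p * q^+4 * l^+3 * d + 2 * p * q^+4 * l^+4 * d + 2 * p^+2 * l^+2 * d - 4 * p^+2 * l^+4 * d + 2 * p^+2 * l^+6 * d - 2 * p^+2 * q^+2 * d + 2 * p^+2 * q^+2 * l^+2 * d + 2 * p^+2 * q^+2 * l^+4 * d - 2 * p^+2 * q^+2 * l^+6 * d + 2 * p^+2 * q^+4 * d - 4 * p^+2 * q^+4 * l^+2 * d + 2 * p^+2 * q^+4 * l^+4 * d + 2 * p^+3 * l^+2 * d - 2 * p^+3 * l^+3 * d - 2 * p^+3 * l^+4 * d + 2 * p^+3 * l^+5 * d - 2 * p^+3 * q^+2 * d + 2 * p^+3 * q^+2 * l * d + 2 * p^+3 * q^+2 * l^+4 * d - 2 * p^+3 * q^+2 * l^+5 * d + 2 * p^+3 * q^+4 * d - 2 * p^+3 * q^+4 * l * d - 2 * p^+3 * q^+4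 * l^+2 * d + 2 * p^+3 * q^+4 * l^+3 * d - 2 * v * t * p * q^+2 * l^+2 + 2 * v * t * p * q^+2 * l^+3 + 2 * v * t * p * q^+2 * l^+4 - 2 * v * t * p * q^+2 * l^+5 - 2 * v * t * p^+2 * q^+2 * l + 4 * v * t * p^+2 * q^+2 * l^+3 - 2 * v * t * p^+2 * q^+2 * l^+5 - 2 * v * t * p^+3 * q^+2 * l + 2 * v * t * p^+3 * q^+2 * l^+2 + 2 * v * t * p^+3 * q^+2 * l^+3 - 2 * v * t * p^+3 * q^+2 * l^+4).
Definition Q3e_21_01 (d v t p q l : C) : C := (2 * t * p^+2 * q * l^+2 - 2 * t * p^+2 * q * l^+3 - 2 * t * p^+2 * q * l^+4 + 2 * t * p^+2 * q * l^+5 + 2 * t * p^+2 * q^+2 * l - 4 * t * p^+2 * q^+2 * l^+3 + 2 * t * p^+2 * q^+2 * l^+5 + 2 * t * p^+2 * q^+3 * l - 2 * t * p^+2 * q^+3 * l^+2 - 2 * t * p^+2 * q^+3 * l^+3 + 2 * t * p^+2 * q^+3 * l^+4 - 2 * v * p^+2 * q * l^+2 + 2 * v * p^+2 * q * l^+3 + 2 * v * p^+2 * q * l^+4 - 2 * v * p^+2 * q * l^+5 + 2 * v * p^+2 * q^+2 * l - 4 * v * p^+2 * q^+2 * l^+3 + 2 * v * p^+2 * q^+2 * l^+5 - 2 * v * p^+2 * q^+3 * l + 2 * v * p^+2 * q^+3 * l^+2 + 2 * v * p^+2 * q^+3 * l^+3 - 2 * v * p^+2 * q^+3 * l^+4)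.
Definition Q3m_21_01 (p q l : C) : C := l^+3 * p^+2 * q^+2.
Lemma Q3form_21_01 d U S v t p q l : l != 0 -> p != 0 -> q != 0 ->
  (M3_21 d U S p v t q l) 0 1 = bil (Q3a_21_01 d v t p q l) (Q3b_21_01 d v t p q l) (Q3c_21_01 d v t p q l) (Q3e_21_01 d v t p q l) U S / Q3m_21_01 p q l.
Proof.
move=> hl hp hq; rewrite /M3_21 /Q3L1 /Q3L2 mx2_mul !mxE /= /bil /Q3a_21_01 /Q3b_21_01 /Q3c_21_01 /Q3e_21_01 /Q3m_21_01.
by field; rewrite hl hp hq.
Qed.
Lemma Q3big_21_01 d u s v t p q l :
  bilH (Q3a_21_01 d v t p q l) (Q3b_21_01 d v t p q l) (Q3c_21_01 d v t p q l) (Q3e_21_01 d v t p q l)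
     (Un3 d u s v t p q) (Du3 u s v t p q) (Sn3 d u s v t p q) (Ds3 u s v t p q)
   * (q * (q^+2 - 1) * Q3A d u s p * Q3m_21_01 q p l)
  = p * (p^+2 - 1) * Q3A d v t q *
  bilH (Q3a_21_01 d u s q p l) (Q3b_21_01 d u s q p l) (Q3c_21_01 d u s q p l) (Q3e_21_01 d u s q p l)
     (Un3 d v t u s q p) (Du3 v t u s q p) (Sn3 d v t u s q p) (Ds3 v t u s q p) * Q3m_21_01 p q l.
Proof.
rewrite /bilH /Q3a_21_01 /Q3b_21_01 /Q3c_21_01 /Q3e_21_01 /Q3m_21_01 /Un3 /Du3 /Sn3 /Ds3 /NX3 /NY3 /PX3 /PY3 /Q3A.
ring.
Qed.
Lemma Q3entry_21_01 d u s v t p q l : l != 0 -> p != 0 -> q != 0 -> q^+2 - 1 != 0 ->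
  PX3 u s v t p q != 0 -> PY3 u s v t p q != 0 -> PX3 v t u s q p != 0 -> PY3 v t u s q p != 0 ->
  Q3A d u s p != 0 ->
  (M3_21 d (Un3 d u s v t p q / Du3 u s v t p q) (Sn3 d u s v t p q / Ds3 u s v t p q) p v t q l) 0 1 =
  k3 d u s v t p q * (M3_21 d (Un3 d v t u s q p / Du3 v t u s q p) (Sn3 d v t u s q p / Ds3 v t u s q p) q u s p l) 0 1.
Proof.
move=> hl hp hq hq2 h1 h2 h3 h4 hA.
have n1 : Du3 u s v t p q != 0 by rewrite /Du3 !mulf_neq0.
have n2 : Ds3 u s v t p q != 0 by rewrite /Ds3 !mulf_neq0.
have n3 : Du3 v t u s q p != 0 by rewrite /Du3 !mulf_neq0.
have n4 : Ds3 v t u s q p != 0 by rewrite /Ds3 !mulf_neq0.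
rewrite !Q3form_21_01 // !bil_frac // /k3 /Du3 /Ds3.
apply: assemble3 => //.
- by rewrite /Q3m_21_01; cneq.
- by rewrite /Q3m_21_01; cneq.
exact: Q3big_21_01.
Qed.
Definition Q3a_21_10 (d v t p q l : C) : C := (- 2 * t * l - 2 * t * l^+2 + 2 * t * q - 2 * t * q * l^+2 + 2 * t * q^+2 + 2 * t * q^+2 * l + 2 * t * p^+2 * l + 2 * t * p^+2 * l^+2 - 2 * t * p^+2 * q + 2 * t * p^+2 * q * l^+2 - 2 * t * p^+2 * q^+2 - 2 * t * p^+2 * q^+2 * l - 2 * v * l - 2 * v * l^+2 - 2 * v * q + 2 * v * q * l^+2 + 2 * v * q^+2 + 2 * v * q^+2 * l + 2 * v * p^+2 * l + 2 * v * p^+2 * l^+2 + 2 * v * p^+2 * q - 2 * v * p^+2 * q * l^+2 - 2 * v * p^+2 * q^+2 - 2 * v * p^+2 * q^+2 * l).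
Definition Q3b_21_10 (d v t p q l : C) : C := (2 * l + 2 * l^+2 - 2 * q^+2 * l - 2 * q^+2 * l^+2 + 2 * p - 2 * p * l^+2 - 2 * p * q^+2 + 2 * p * q^+2 * l^+2 - 2 * p^+2 - 2 * p^+2 * l + 2 * p^+2 * q^+2 + 2 * p^+2 * q^+2 * l).
Definition Q3c_21_10 (d v t p q l : C) : C := (- 2 * l - 2 * l^+2 + 2 * q^+2 * l + 2 * q^+2 * l^+2 + 2 * p - 2 * p * l^+2 - 2 * p * q^+2 + 2 * p * q^+2 * l^+2 + 2 * p^+2 + 2 * p^+2 * l - 2 * p^+2 * q^+2 - 2 * p^+2 * q^+2 * l).
Definition Q3e_21_10 (d v t p q l : C) : C := 0.
Definition Q3m_21_10 (p q l : C) : C := l^+1 * p^+1 * q^+1.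
Lemma Q3form_21_10 d U S v t p q l : l != 0 -> p != 0 -> q != 0 ->
  (M3_21 d U S p v t q l) 1 0 = bil (Q3a_21_10 d v t p q l) (Q3b_21_10 d v t p q l) (Q3c_21_10 d v t p q l) (Q3e_21_10 d v t p q l) U S / Q3m_21_10 p q l.
Proof.
move=> hl hp hq; rewrite /M3_21 /Q3L1 /Q3L2 mx2_mul !mxE /= /bil /Q3a_21_10 /Q3b_21_10 /Q3c_21_10 /Q3e_21_10 /Q3m_21_10.
by field; rewrite hl hp hq.
Qed.
Lemma Q3big_21_10 d u s v t p q l :
  bilH (Q3a_21_10 d v t p q l) (Q3b_21_10 d v t p q l) (Q3c_21_10 d v t p q l) (Q3e_21_10 d v t p q l)
     (Un3 d u s v t p q) (Du3 u s v t p q) (Sn3 d u s v t p q) (Ds3 u s v t p q)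
   * (q * (q^+2 - 1) * Q3A d u s p * Q3m_21_10 q p l)
  = p * (p^+2 - 1) * Q3A d v t q *
  bilH (Q3a_21_10 d u s q p l) (Q3b_21_10 d u s q p l) (Q3c_21_10 d u s q p l) (Q3e_21_10 d u s q p l)
     (Un3 d v t u s q p) (Du3 v t u s q p) (Sn3 d v t u s q p) (Ds3 v t u s q p) * Q3m_21_10 p q l.
Proof.
rewrite /bilH /Q3a_21_10 /Q3b_21_10 /Q3c_21_10 /Q3e_21_10 /Q3m_21_10 /Un3 /Du3 /Sn3 /Ds3 /NX3 /NY3 /PX3 /PY3 /Q3A.
ring.
Qed.
Lemma Q3entry_21_10 d u s v t p q l : l != 0 -> p != 0 -> q != 0 -> q^+2 - 1 != 0 ->
  PX3 u s v t p q != 0 -> PY3 u s v t p q != 0 -> PX3 v t u s q p != 0 -> PY3 v t u s q p != 0 ->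
  Q3A d u s p != 0 ->
  (M3_21 d (Un3 d u s v t p q / Du3 u s v t p q) (Sn3 d u s v t p q / Ds3 u s v t p q) p v t q l) 1 0 =
  k3 d u s v t p q * (M3_21 d (Un3 d v t u s q p / Du3 v t u s q p) (Sn3 d v t u s q p / Ds3 v t u s q p) q u s p l) 1 0.
Proof.
move=> hl hp hq hq2 h1 h2 h3 h4 hA.
have n1 : Du3 u s v t p q != 0 by rewrite /Du3 !mulf_neq0.
have n2 : Ds3 u s v t p q != 0 by rewrite /Ds3 !mulf_neq0.
have n3 : Du3 v t u s q p != 0 by rewrite /Du3 !mulf_neq0.
have n4 : Ds3 v t u s q p != 0 by rewrite /Ds3 !mulf_neq0.
rewrite !Q3form_21_10 // !bil_frac // /k3 /Du3 /Ds3.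
apply: assemble3 => //.
- by rewrite /Q3m_21_10; cneq.
- by rewrite /Q3m_21_10; cneq.
exact: Q3big_21_10.
Qed.
Definition Q3a_21_11 (d v t p q l : C) : C := (- 4 * l^+2 * d + 4 * l^+4 * d + 4 * q^+2 * d - 4 * q^+2 * l^+4 * d - 4 * q^+4 * d + 4 * q^+4 * l^+2 * d + 4 * p^+2 * l^+2 * d - 4 * p^+2 * l^+4 * d - 4 * p^+2 * q^+2 * d + 4 * p^+2 * q^+2 * l^+4 * d + 4 * p^+2 * q^+4 * d - 4 * p^+2 * q^+4 * l^+2 * d + 4 * v * t * q^+2 * l - 4 * v * t * q^+2 * l^+3 - 4 * v * t * p^+2 * q^+2 * l + 4 * v * t * p^+2 * q^+2 * l^+3).
Definition Q3b_21_11 (d v t p q l : C) : C := (- t * q * l^+2 + t * q * l^+4 - t * q^+2 * l - t * q^+2 * l^+2 + t * q^+2 * l^+3 + t * q^+2 * l^+4 - t * q^+3 * l + t * q^+3 * l^+3 - t * p * q * l + t * p * q * l^+2 + t * p * q * l^+3 - t * p * q * l^+4 - t * p * q^+2 + 2 * t * p * q^+2 * l^+2 - t * p * q^+2 * l^+4 - t * p * q^+3 + t * p * q^+3 * l + t * p * q^+3 * l^+2 - t * p * q^+3 * l^+3 + t * p^+2 * q * l - t * p^+2 * q * l^+3 + t * p^+2 * q^+2 + t * p^+2 * q^+2 * l - t * p^+2 * q^+2 * l^+2 - t * p^+2 * q^+2 * l^+3 + t * p^+2 * q^+3 - t * p^+2 * q^+3 * l^+2 + v * q * l^+2 - v * q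 * l^+4 - v * q^+2 * l - v * q^+2 * l^+2 + v * q^+2 * l^+3 + v * q^+2 * l^+4 + v * q^+3 * l - v * q^+3 * l^+3 + v * p * q * l - v * p * q * l^+2 - v * p * q * l^+3 + v * p * q * l^+4 - v * p * q^+2 + 2 * v * p * q^+2 * l^+2 - v * p * q^+2 * l^+4 + v * p * q^+3 - v * p * q^+3 * l - v * p * q^+3 * l^+2 + v * p * q^+3 * l^+3 - v * p^+2 * q * l + v * p^+2 * q * l^+3 + v * p^+2 * q^+2 + v * p^+2 * q^+2 * l - v * p^+2 * q^+2 * l^+2 - v * p^+2 * q^+2 * l^+3 - v * p^+2 * q^+3 + v * p^+2 * q^+3 * l^+2).
Definition Q3c_21_11 (d v t p q l : C) : C := (t * q * l^+2 - t * q * l^+4 + t * q^+2 * l + t * q^+2 * l^+2 - t * q^+2 * l^+3 - t * q^+2 * l^+4 + t * q^+3 * l - t * q^+3 * l^+3 - t * p * q * l + t * p * q * l^+2 + t * p * q * l^+3 - t * p * q * l^+4 - t * p * q^+2 + 2 * t * p * q^+2 * l^+2 - t * p * q^+2 * l^+4 - t * p * q^+3 + t * p * q^+3 * l + t * p * q^+3 * l^+2 - t * p * q^+3 * l^+3 - t * p^+2 * q * l + t * p^+2 * q * l^+3 - t * p^+2 * q^+2 - t * p^+2 * q^+2 * l + t * p^+2 * q^+2 * l^+2 + t * p^+2 * q^+2 * l^+3 - t * p^+2 * q^+3 + t * p^+2 * q^+3 * l^+2 - v * q * l^+2 + v * q * l^+4 + v * q^+2 * l + v * q^+2 * l^+2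 - v * q^+2 * l^+3 - v * q^+2 * l^+4 - v * q^+3 * l + v * q^+3 * l^+3 + v * p * q * l - v * p * q * l^+2 - v * p * q * l^+3 + v * p * q * l^+4 - v * p * q^+2 + 2 * v * p * q^+2 * l^+2 - v * p * q^+2 * l^+4 + v * p * q^+3 - v * p * q^+3 * l - v * p * q^+3 * l^+2 + v * p * q^+3 * l^+3 + v * p^+2 * q * l - v * p^+2 * q * l^+3 - v * p^+2 * q^+2 - v * p^+2 * q^+2 * l + v * p^+2 * q^+2 * l^+2 + v * p^+2 * q^+2 * l^+3 + v * p^+2 * q^+3 - v * p^+2 * q^+3 * l^+2).
Definition Q3e_21_11 (d v t p q l : C) : C := 0.
Definition Q3m_21_11 (p q l : C) : C := l^+2 * p^+1 * q^+2.
Lemma Q3form_21_11 d U S v t p q l : l != 0 -> p != 0 -> q != 0 ->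
  (M3_21 d U S p v t q l) 1 1 = bil (Q3a_21_11 d v t p q l) (Q3b_21_11 d v t p q l) (Q3c_21_11 d v t p q l) (Q3e_21_11 d v t p q l) U S / Q3m_21_11 p q l.
Proof.
move=> hl hp hq; rewrite /M3_21 /Q3L1 /Q3L2 mx2_mul !mxE /= /bil /Q3a_21_11 /Q3b_21_11 /Q3c_21_11 /Q3e_21_11 /Q3m_21_11.
by field; rewrite hl hp hq.
Qed.
Lemma Q3big_21_11 d u s v t p q l :
  bilH (Q3a_21_11 d v t p q l) (Q3b_21_11 d v t p q l) (Q3c_21_11 d v t p q l) (Q3e_21_11 d v t p q l)
     (Un3 d u s v t p q) (Du3 u s v t p q) (Sn3 d u s v t p q) (Ds3 u s v t p q)
   * (q * (q^+2 - 1) * Q3A d u s p * Q3m_21_11 q p l)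
  = p * (p^+2 - 1) * Q3A d v t q *
  bilH (Q3a_21_11 d u s q p l) (Q3b_21_11 d u s q p l) (Q3c_21_11 d u s q p l) (Q3e_21_11 d u s q p l)
     (Un3 d v t u s q p) (Du3 v t u s q p) (Sn3 d v t u s q p) (Ds3 v t u s q p) * Q3m_21_11 p q l.
Proof.
rewrite /bilH /Q3a_21_11 /Q3b_21_11 /Q3c_21_11 /Q3e_21_11 /Q3m_21_11 /Un3 /Du3 /Sn3 /Ds3 /NX3 /NY3 /PX3 /PY3 /Q3A.
ring.
Qed.
Lemma Q3entry_21_11 d u s v t p q l : l != 0 -> p != 0 -> q != 0 -> q^+2 - 1 != 0 ->
  PX3 u s v t p q != 0 -> PY3 u s v t p q != 0 -> PX3 v t u s q p != 0 -> PY3 v t u s q p != 0 ->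
  Q3A d u s p != 0 ->
  (M3_21 d (Un3 d u s v t p q / Du3 u s v t p q) (Sn3 d u s v t p q / Ds3 u s v t p q) p v t q l) 1 1 =
  k3 d u s v t p q * (M3_21 d (Un3 d v t u s q p / Du3 v t u s q p) (Sn3 d v t u s q p / Ds3 v t u s q p) q u s p l) 1 1.
Proof.
move=> hl hp hq hq2 h1 h2 h3 h4 hA.
have n1 : Du3 u s v t p q != 0 by rewrite /Du3 !mulf_neq0.
have n2 : Ds3 u s v t p q != 0 by rewrite /Ds3 !mulf_neq0.
have n3 : Du3 v t u s q p != 0 by rewrite /Du3 !mulf_neq0.
have n4 : Ds3 v t u s q p != 0 by rewrite /Ds3 !mulf_neq0.
rewrite !Q3form_21_11 // !bil_frac // /k3 /Du3 /Ds3.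
apply: assemble3 => //.
- by rewrite /Q3m_21_11; cneq.
- by rewrite /Q3m_21_11; cneq.
exact: Q3big_21_11.
Qed.

Lemma PX3_nz (u s v t p q : C) : p != 0 -> q != 0 ->
  (let a := Q3a p in let b := Q3a q in let c := Q3c p q in 2 * b * s - (a + b + c) * t - (a - b - c) * v != 0) ->
  PX3 u s v t p q != 0.
Proof.
move=> hp hq /= h; apply: (@nz_from _ _ (p * q) h); first by rewrite mulf_neq0.
by rewrite /PX3 /Q3a /Q3c; field; rewrite hp hq.
Qed.
Lemma PY3_nz (u s v t p q : C) : p != 0 -> q != 0 ->
  (let a := Q3a p in let b := Q3a q in let c := Q3c p q in 2 * b * u - (a - b + c) * t - (a + b - c) * v != 0) ->
  PY3 u s v t p q != 0.
Proof.
move=> hp hq /= h; apply: (@nz_from _ _ (p * q) h); first by rewrite mulf_neq0.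
by rewrite /PY3 /Q3a /Q3c; field; rewrite hp hq.
Qed.
Lemma Q3X_eq d (u s v t p q : C) : p != 0 -> q != 0 -> PX3 u s v t p q != 0 ->
  Q3X d u s v t p q = Un3 d u s v t p q / Du3 u s v t p q.
Proof.
move=> hp hq h; rewrite /Q3X /Un3 /Du3 /NX3 /Q3a /Q3c /=.
move: h; rewrite /PX3 => h.
field; nzall p q.
Qed.
Lemma Q3Y_eq d (u s v t p q : C) : p != 0 -> q != 0 -> PY3 u s v t p q != 0 ->
  Q3Y d u s v t p q = Sn3 d u s v t p q / Ds3 u s v t p q.
Proof.
move=> hp hq h; rewrite /Q3Y /Sn3 /Ds3 /NY3 /Q3a /Q3c /=.
move: h; rewrite /PY3 => h.
field; nzall p q.
Qed.

Lemma Q3_lax (d : C) : is_Lax_matrix (@nzpar C) (@Q3X C d) (@Q3Y C d) (@Q3dom C) (@Q3L1 C d) (@Q3L2 C d) (@Q3A C d).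
Proof.
move=> u s v t p q Pp Pq [D1 D2] [D3 D4] u2 s2 v1 t1 -> -> -> -> Hu Hv Hu2 Hv1.
have [lam0 Hl] := avoid_list [:: 0; 1; -1; p; -p; q; -q].
rewrite !inE !negb_or in Hl; hlsplit.
have hp : p != 0 := Pp.
have hq : q != 0 := Pq.
have hq2 : q^+2 - 1 != 0.
  apply: contraNneq Hv1 => E; apply/eqP.
  have : (q - 1) * (q + 1) = 0 by rewrite -E; ring.
  move/eqP; rewrite mulf_eq0 => /orP [/eqP E1 | /eqP E1].
    have E2 : q = 1 by apply/eqP; rewrite -subr_eq0 E1.
    subst q; move: D3 D4; rewrite /Q3dom /Q3a /Q3c /= => D3 D4.
    have -> : Q3Y d v t u s 1 p = 0 by rewrite /Q3Y /Q3a /Q3c /=; field; nzall p p.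
    by rewrite /Q3A; ring.
  have E2 : q = -1 by apply/eqP; rewrite -subr_eq0 opprK E1.
  subst q; move: D3 D4; rewrite /Q3dom /Q3a /Q3c /= => D3 D4.
  have -> : Q3X d v t u s (-1) p = 0 by rewrite /Q3X /Q3a /Q3c /=; field; nzall p p.
  by rewrite /Q3A; ring.
have X1 : PX3 u s v t p q != 0 by apply: PX3_nz.
have X2 : PY3 u s v t p q != 0 by apply: PY3_nz.
have X3 : PX3 v t u s q p != 0 by apply: PX3_nz.
have X4 : PY3 v t u s q p != 0 by apply: PY3_nz.
apply: (@lax_generic2 (@nzpar C) (@Q3L1 C d) (@Q3L2 C d) (@Q3A C d) c_Q3 u s v t p q _ _ _ _ (k3 d u s v t p q) lam0).
- exact: Q3_det1.
- exact: Q3_det2.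
- done.
- done.
- done.
- rewrite /c_Q3; cneq.
- rewrite /c_Q3; cneq.
- done.
- done.
- done.
- done.
move=> lam Hlam; rewrite /nzpar in Hlam.
rewrite (Q3X_eq d u s v t p q) // (Q3Y_eq d u s v t p q) // (Q3X_eq d v t u s q p) // (Q3Y_eq d v t u s q p) //.
split; apply: mx2_ext; rewrite scale_entry.
- exact: (Q3entry_12_00 d u s v t p q lam).
- exact: (Q3entry_12_01 d u s v t p q lam).
- exact: (Q3entry_12_10 d u s v t p q lam).
- exact: (Q3entry_12_11 d u s v t p q lam).
- exact: (Q3entry_21_00 d u s v t p q lam).
- exact: (Q3entry_21_01 d u s v t p q lam).
- exact: (Q3entry_21_10 d u s v t p q lam).
- exact: (Q3entry_21_11 d u s v t p q lam).
Qed.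

Lemma Q3_detc (d : C) : det_cond (@nzpar C) (@Q3L1 C d) (@Q3L2 C d) (@Q3A C d).
Proof.
exists c_Q3; split.
  have [lam0 Hl] := avoid_list [:: 0; 1; -1; 1; -1; 1; -1].
  rewrite !inE !negb_or in Hl; hlsplit.
  exists 1, lam0; split; rewrite /c_Q3 /nzpar ?oner_neq0 //; cneq.
move=> u s p lam hp hl; split; [exact: Q3_det1 | exact: Q3_det2].
Qed.

End Gen.

Theorem proposition5p2 (C : numClosedFieldType) :
  (forall d : C, d = 0 \/ d = 1 ->
     is_Lax_matrix (@nzpar C) (Q3X d) (Q3Y d) (@Q3dom C) (Q3L1 d) (Q3L2 d) (Q3A d)
     /\ det_cond (@nzpar C) (Q3L1 d) (Q3L2 d) (Q3A d)) /\
  (is_Lax_matrix (@anypar C) (@Q2X C) (@Q2Y C) (@Q2dom C) (@Q2L1 C) (@Q2L2 C) (@Q2A C)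
     /\ det_cond (@anypar C) (@Q2L1 C) (@Q2L2 C) (@Q2A C)) /\
  (forall d : C, d = 0 \/ d = 1 ->
     is_Lax_matrix (@anypar C) (Q1X d) (Q1Y d) (@Q1dom C) (Q1L1 d) (Q1L2 d) (Q1A d)
     /\ det_cond (@anypar C) (Q1L1 d) (Q1L2 d) (Q1A d)) /\
  (forall d : C, d = 0 \/ d = 1 ->
     is_Lax_matrix (@anypar C) (A1X d) (A1Y d) (@A1dom C) (A1L1 d) (A1L2 d) (A1A d)
     /\ det_cond (@anypar C) (A1L1 d) (A1L2 d) (A1A d)) /\
  (forall d : C, d = 0 \/ d = 1 ->
     is_Lax_matrix (@anypar C) (H3X d) (H3Y d) (@H3dom C) (H3L1 d) (H3L2 d) (H3A d)
     /\ det_cond (@anypar C) (H3L1 d) (H3L2 d) (H3A d)) /\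
  (is_Lax_matrix (@anypar C) (@H2X C) (@H2Y C) (@H2dom C) (@H2L1 C) (@H2L2 C) (@H2A C)
     /\ det_cond (@anypar C) (@H2L1 C) (@H2L2 C) (@H2A C)) /\
  (is_Lax_matrix (@anypar C) (@H1X C) (@H1Y C) (@H1dom C) (@H1L1 C) (@H1L2 C) (@H1A C)
     /\ det_cond (@anypar C) (@H1L1 C) (@H1L2 C) (@H1A C)).
Proof.
split; first by move=> d _; split; [exact: Q3_lax | exact: Q3_detc].
split; first by split; [exact: Q2_lax | exact: Q2_detc].
split; first by move=> d _; split; [exact: Q1_lax | exact: Q1_detc].
split; first by move=> d _; split; [exact: A1_lax | exact: A1_detc].
split; first by move=> d _; split; [exact: H3_lax | exact: H3_detc].
split; first by split; [exact: H2_lax | exact: H2_detc].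
by split; [exact: H1_lax | exact: H1_detc].
Qed.
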